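(* Let $T$ be a locally finite spherically symmetric tree rooted at $\rho$, with connective constant with respect to $\rho$ equal to $\Delta_\rho$, and let $\lambda>0$ satisfy $\lambda<\lambda_c(\Delta_\rho)$, where $\lambda_c(D)=\frac{D^D}{(D-1)^{D+1}}$. Then for any two boundary conditions $\sigma$ and $\tau$ on $T$ which differ only at depth at least $\ell$ in $T$, $$|R_\rho(\sigma,T)-R_\rho(\tau,T)|=\exp(-\Omega(\ell)).$$
   Context: A rooted tree is spherically symmetric if the degree of each vertex depends only on its distance from the root. If $d_i$ is the arity (number of children) of vertices at distance $i$ from $\rho$, then $N(\rho,\ell)=\prod_{i=0}^{\ell-1}d_i$ and $\Delta_\rho=\limsup_{\ell\to\infty}N(\rho,\ell)^{1/\ell}$. Hard core model with activity $\lambda$: independent sets $I$ weighted by $\lambda^{|I|}$; a boundary condition fixes the states (occupied/unoccupied) of some vertices consistently with an independent set; $R_\rho(\sigma,T)=p/(1-p)$ where $p$ is the probability that $\rho$ is occupied under the hard core distribution conditioned on $\sigma$. *)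

(* Defs.v *)
From Stdlib Require Import Reals Lra List Arith Bool.
From Coquelicot Require Import Coquelicot.
Import ListNotations.
Open Scope R_scope.
Open Scope bool_scope.
Open Scope R_scope.

(** Spherically symmetric tree with arity sequence [d] (locally finite:
    each [d i] is a natural number).  A vertex at depth [k] is the list
    [c_0; ...; c_{k-1}] of child indices with [c_i < d i]; the root [rho]
    is [nil]; the children of [v] are [v ++ [c]] for [c < d (length v)]. *)

Fixpoint level (d : nat -> nat) (k : nat) : list (list nat) :=
  match k with
  | O => [ [] ]
  | S k' => flat_map (fun v => map (fun c => v ++ [c]) (seq 0 (d k')))
                     (level d k')
  end.

Definition verts (d : nat -> nat) (L : nat) : list (list nat) :=
  flat_map (level d) (seq 0 (S L)).

Definition Nlev (d : nat -> nat) (l : nat) : R :=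
  fold_right Rmult 1 (map (fun i => INR (d i)) (seq 0 l)).

Definition root_l (x : R) (l : nat) : R :=
  if Req_EM_T x 0 then 0 else Rpower x (/ INR l).

Definition conn_const (d : nat -> nat) : Rbar :=
  LimSup_seq (fun l => root_l (Nlev d l) l).

(** lambda_c(D) = D^D/(D-1)^(D+1), with the usual conventions
    lambda_c(D) = +oo for D <= 1 and lambda_c(+oo) = 0. *)
Definition lambda_c (D : Rbar) : Rbar :=
  match D with
  | Finite x => if Rle_dec x 1 then p_infty
                else Finite (Rpower x x / Rpower (x - 1) (x + 1))
  | p_infty => Finite 0
  | m_infty => p_infty
  end.

Definition list_eqb (u v : list nat) : bool :=
  if list_eq_dec Nat.eq_dec u v then true else false.

Definition memb (v : list nat) (S : list (list nat)) : bool :=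
  existsb (fun w => list_eqb w v) S.

Definition childb (u v : list nat) : bool :=
  Nat.eqb (length v) (S (length u)) && list_eqb (firstn (length u) v) u.

Definition adjb (u v : list nat) : bool := childb u v || childb v u.

Definition indepb (S : list (list nat)) : bool :=
  forallb (fun u => forallb (fun v => negb (adjb u v)) S) S.

Fixpoint subsets {A : Type} (l : list A) : list (list A) :=
  match l with
  | [] => [ [] ]
  | x :: t => let r := subsets t in r ++ map (cons x) r
  end.

(** boundary condition: [Some true] = fixed occupied, [Some false] = fixed
    unoccupied, [None] = free. *)
Definition bcond := list nat -> option bool.

Definition consistentb (d : nat -> nat) (L : nat) (sigma : bcond)
  (S : list (list nat)) : bool :=
  forallb (fun v => match sigma v with
                    | Some true => memb v S
                    | Some false => negb (memb v S)
                    | None => true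
                    end) (verts d L).

Definition boundary_ok (d : nat -> nat) (L : nat) (sigma : bcond) : Prop :=
  indepb (filter (fun v => match sigma v with Some true => true | _ => false end)
                 (verts d L)) = true.

Definition Zpart (d : nat -> nat) (lam : R) (L : nat) (sigma : bcond)
  (P : list (list nat) -> bool) : R :=
  fold_right Rplus 0
    (map (fun I => lam ^ length I)
       (filter (fun I => indepb I && consistentb d L sigma I && P I)
          (subsets (verts d L)))).

Definition prob_root (d : nat -> nat) (lam : R) (L : nat) (sigma : bcond) : R :=
  Zpart d lam L sigma (memb []) / Zpart d lam L sigma (fun _ => true).

Definition Rratio (d : nat -> nat) (lam : R) (L : nat) (sigma : bcond) : R :=
  let p := prob_root d lam L sigma in p / (1 - p).

(* Main.v *)
Require Import Defs.
From Stdlib Require Import Reals Lra Lia List Arith Bool FunctionalExtensionality.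
From Coquelicot Require Import Coquelicot.
Import ListNotations.
Open Scope R_scope.

Notation sumR := (fold_right Rplus 0).
Notation prodR := (fold_right Rmult 1).

Definition indR (b : bool) : R := if b then 1 else 0.

Lemma sumR_app l1 l2 : sumR (l1 ++ l2) = sumR l1 + sumR l2.
Proof. induction l1; simpl; [ring| rewrite IHl1; ring]. Qed.
Lemma prodR_app l1 l2 : prodR (l1 ++ l2) = prodR l1 * prodR l2.
Proof. induction l1; simpl; [ring| rewrite IHl1; ring]. Qed.
Lemma sumR_scal {X} (l : list X) c f :
  sumR (map (fun x => c * f x) l) = c * sumR (map f l).
Proof. induction l; simpl; [ring| rewrite IHl; ring]. Qed.
Lemma sumR_plus {X} (l : list X) f g :
  sumR (map (fun x => f x + g x) l) = sumR (map f l) + sumR (map g l).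
Proof. induction l; simpl; [ring| rewrite IHl; ring]. Qed.
Lemma sum_filter {X} (l : list X) p g :
  sumR (map g (filter p l)) = sumR (map (fun x => indR (p x) * g x) l).
Proof. induction l; simpl; auto. destruct (p a); simpl; rewrite IHl; unfold indR; ring. Qed.
Lemma indR_and a b : indR (a && b) = indR a * indR b.
Proof. destruct a, b; unfold indR; simpl; ring. Qed.
Lemma indR_forallb {X} (f : X -> bool) l : indR (forallb f l) = prodR (map (fun x => indR (f x)) l).
Proof. induction l; simpl. reflexivity. rewrite indR_and, IHl. reflexivity. Qed.
Lemma prodR_map_mult {X} (l : list X) f g :
  prodR (map (fun x => f x * g x) l) = prodR (map f l) * prodR (map g l).
Proof. induction l; simpl; [ring| rewrite IHl; ring]. Qed.
Lemma prodR_flat_map {X Y} (l : list X) (h : X -> list Y) g :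
  prodR (map g (flat_map h l)) = prodR (map (fun x => prodR (map g (h x))) l).
Proof. induction l; simpl; auto. rewrite map_app, prodR_app, IHl. reflexivity. Qed.

Lemma sum_sub_app {X} (V W : list X) (f : list X -> R) :
  sumR (map f (subsets (V ++ W))) =
  sumR (map (fun I1 => sumR (map (fun I2 => f (I1 ++ I2)) (subsets W))) (subsets V)).
Proof.
  revert f; induction V as [|x V IH]; intro f; simpl.
  - rewrite Rplus_0_r. reflexivity.
  - rewrite !map_app, !sumR_app, !map_map, IH, IH. reflexivity.
Qed.

Lemma sub_incl {X} (W : list X) I : In I (subsets W) -> forall x, In x I -> In x W.
Proof.
  revert I; induction W as [|y W IH]; simpl; intros I HI x Hx.
  - destruct HI as [<-|[]]. destruct Hx.
  - apply in_app_or in HI. destruct HI as [HI|HI].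
    + right. eauto.
    + apply in_map_iff in HI. destruct HI as [J [<- HJ]].
      destruct Hx as [->|Hx]; [left; auto | right; eauto].
Qed.

Lemma list_eqb_true u v : list_eqb u v = true <-> u = v.
Proof. unfold list_eqb. destruct (list_eq_dec Nat.eq_dec u v); split; congruence. Qed.
Lemma list_eqb_false u v : u <> v -> list_eqb u v = false.
Proof. unfold list_eqb. destruct (list_eq_dec Nat.eq_dec u v); congruence. Qed.

Lemma membP v S : memb v S = true <-> In v S.
Proof.
  unfold memb. rewrite existsb_exists. split.
  - intros [w [Hw E]]. apply list_eqb_true in E. subst. auto.
  - intro H. exists v. split; auto. apply list_eqb_true. auto.
Qed.
Lemma memb_false v S : ~ In v S -> memb v S = false.
Proof. intro H. destruct (memb v S) eqn:E; auto. apply membP in E. contradiction. Qed.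
Lemma memb_app v S T : memb v (S ++ T) = memb v S || memb v T.
Proof. unfold memb. apply existsb_app. Qed.
Lemma memb_cons_neq v x S : x <> v -> memb v (x :: S) = memb v S.
Proof. intro H. unfold memb. simpl. rewrite list_eqb_false; auto. Qed.

Lemma memb_cons_self x S : memb x (x :: S) = true.
Proof. apply membP. left; auto. Qed.

Lemma sum_prod_sub (W : list (list nat)) (h : list nat -> bool -> R) :
  NoDup W ->
  sumR (map (fun I => prodR (map (fun u => h u (memb u I)) W)) (subsets W)) =
  prodR (map (fun u => h u false + h u true) W).
Proof.
  induction W as [|x W IH]; intro ND; simpl.
  - ring.
  - inversion ND as [|? ? Hx ND']; subst.
    rewrite map_app, sumR_app, map_map.
    assert (E1 : forall I, In I (subsets W) -> memb x I = false).
    { intros I HI. apply memb_false. intro H. apply Hx. eapply sub_incl; eauto. }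
    rewrite (map_ext_in _ (fun I => h x false * prodR (map (fun u => h u (memb u I)) W))).
    2:{ intros I HI. simpl. rewrite E1; auto. }
    rewrite (map_ext_in (fun x0 => prodR (map (fun u => h u (memb u (x :: x0))) (x :: W)))
               (fun I => h x true * prodR (map (fun u => h u (memb u I)) W))).
    2:{ intros I HI. cbn [map fold_right]. rewrite memb_cons_self.
        f_equal. f_equal. apply map_ext_in. intros u Hu. rewrite memb_cons_neq; auto.
        intro; subst; contradiction. }
    rewrite !sumR_scal, IH by auto. ring.
Qed.

Lemma pow_sub (W : list (list nat)) I lam :
  NoDup W -> In I (subsets W) ->
  lam ^ length I = prodR (map (fun u => if memb u I then lam else 1) W).
Proof.
  revert I; induction W as [|x W IH]; intros I ND HI; cbn [subsets map fold_right] in *.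
  - destruct HI as [<-|[]]. reflexivity.
  - inversion ND as [|? ? Hx ND']; subst.
    apply in_app_or in HI. destruct HI as [HI|HI].
    + rewrite (memb_false x I). 2:{ intro H. apply Hx. eapply sub_incl; eauto. }
      rewrite (IH I); auto. ring.
    + apply in_map_iff in HI. destruct HI as [J [<- HJ]].
      rewrite memb_cons_self. cbn [length pow].
      rewrite (IH J); auto. f_equal. f_equal. apply map_ext_in. intros u Hu.
      rewrite memb_cons_neq; auto. intro; subst; contradiction.
Qed.

Lemma forallb_ext_in {X} (f g : X -> bool) l :
  (forall x, In x l -> f x = g x) -> forallb f l = forallb g l.
Proof. induction l; simpl; intros H; auto. rewrite H, IHl; auto. Qed.

Lemma NoDup_flat_map' {X Y} (f : X -> list Y) l :
  NoDup l -> (forall x, In x l -> NoDup (f x)) ->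
  (forall x y z, In x l -> In y l -> In z (f x) -> In z (f y) -> x = y) ->
  NoDup (flat_map f l).
Proof.
  induction l as [|a l IH]; simpl; intros ND H1 H2. constructor.
  inversion ND; subst. apply NoDup_app; auto.
  { apply IH; auto. intros x y z Hx Hy. apply H2; auto. }
  intros z Hz Hz'. apply in_flat_map in Hz'. destruct Hz' as [y [Hy Hzy]].
  assert (a = y) by (apply (H2 a y z); auto). subst. contradiction.
Qed.

Lemma NoDup_map_inj {X Y} (f : X -> Y) l :
  NoDup l -> (forall x y, f x = f y -> x = y) -> NoDup (map f l).
Proof.
  induction l; simpl; intros ND H; constructor; inversion ND; subst; auto.
  intro Hin. apply in_map_iff in Hin. destruct Hin as [x [E Hx]]. apply H in E. subst. contradiction.
Qed.

Lemma level_len d k v : In v (level d k) -> length v = k.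
Proof.
  revert v; induction k; simpl; intros v H.
  - destruct H as [<-|[]]; auto.
  - apply in_flat_map in H. destruct H as [w [Hw Hv]]. apply in_map_iff in Hv.
    destruct Hv as [c [<- _]]. rewrite length_app. simpl. rewrite (IHk w Hw). lia.
Qed.

Lemma level_S_in d k v c : In v (level d k) -> (c < d k)%nat -> In (v ++ [c]) (level d (S k)).
Proof.
  intros Hv Hc. simpl. apply in_flat_map. exists v. split; auto.
  apply in_map_iff. exists c. split; [reflexivity| apply in_seq; lia].
Qed.

Lemma level_S_inv d k u : In u (level d (S k)) ->
  exists v c, u = v ++ [c] /\ In v (level d k) /\ (c < d k)%nat.
Proof.
  simpl. intro H. apply in_flat_map in H. destruct H as [v [Hv Hu]].
  apply in_map_iff in Hu. destruct Hu as [c [<- Hc]]. apply in_seq in Hc.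
  exists v, c. repeat split; auto. lia.
Qed.

Lemma NoDup_level d k : NoDup (level d k).
Proof.
  induction k; simpl. repeat constructor. intros [].
  apply NoDup_flat_map'; auto.
  - intros v _. apply NoDup_map_inj. apply seq_NoDup.
    intros x y E. apply app_inj_tail in E. destruct E; auto.
  - intros x y z _ _ Hx Hy. apply in_map_iff in Hx, Hy.
    destruct Hx as [c [<- _]]. destruct Hy as [c' [E _]].
    apply app_inj_tail in E. destruct E; auto.
Qed.

Lemma verts_S d L : verts d (S L) = verts d L ++ level d (S L).
Proof. unfold verts. rewrite seq_S, flat_map_app. simpl. rewrite app_nil_r. reflexivity. Qed.

Lemma verts_len d L v : In v (verts d L) -> (length v <= L)%nat.
Proof.
  unfold verts. intro H. apply in_flat_map in H. destruct H as [k [Hk Hv]].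
  apply in_seq in Hk. apply level_len in Hv. lia.
Qed.

Lemma level_in_verts d L k v : (k <= L)%nat -> In v (level d k) -> In v (verts d L).
Proof. intros Hk Hv. unfold verts. apply in_flat_map. exists k. split; auto. apply in_seq. lia. Qed.

Lemma root_in_verts d L : In [] (verts d L).
Proof. apply (level_in_verts d L 0); [lia| simpl; auto]. Qed.

Lemma childb_spec u v : childb u v = true <-> length v = S (length u) /\ firstn (length u) v = u.
Proof. unfold childb. rewrite andb_true_iff, Nat.eqb_eq, list_eqb_true. tauto. Qed.

Lemma childb_parent w c : childb w (w ++ [c]) = true.
Proof.
  apply childb_spec. rewrite length_app. simpl. split. lia.
  rewrite firstn_app, Nat.sub_diag, firstn_all. simpl. apply app_nil_r.
Qed.

Lemma indepb_spec S : indepb S = true <-> forall u v, In u S -> In v S -> adjb u v = false.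
Proof.
  unfold indepb. rewrite forallb_forall. split.
  - intros H u v Hu Hv. specialize (H u Hu). rewrite forallb_forall in H.
    specialize (H v Hv). apply negb_true_iff in H. auto.
  - intros H u Hu. apply forallb_forall. intros v Hv. apply negb_true_iff. auto.
Qed.

Lemma indep_split d L I1 I2 :
  (forall x, In x I1 -> In x (verts d L)) ->
  (forall x, In x I2 -> In x (level d (S L))) ->
  indepb (I1 ++ I2) = indepb I1 &&
     forallb (fun u => negb (memb (removelast u) I1 && memb u I2)) (level d (S L)).
Proof.
  intros H1 H2. apply eq_true_iff_eq. rewrite andb_true_iff, !indepb_spec, forallb_forall.
  split.
  - intros H. split.
    + intros u v Hu Hv. apply H; apply in_or_app; auto.
    + intros u Hu. apply negb_true_iff. destruct (memb (removelast u) I1) eqn:E1; auto.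
      destruct (memb u I2) eqn:E2; auto. apply membP in E1, E2.
      destruct (level_S_inv _ _ _ Hu) as [w [c [-> _]]]. rewrite removelast_last in E1.
      specialize (H w (w ++ [c])). unfold adjb in H. rewrite childb_parent in H.
      simpl in H. rewrite H in *; auto; apply in_or_app; auto.
  - intros [HA HB] u v Hu Hv. apply in_app_or in Hu, Hv.
    assert (key : forall x y, In x I1 -> In y I2 -> adjb x y = false /\ adjb y x = false).
    { intros x y Hx Hy. pose proof (verts_len _ _ _ (H1 x Hx)) as Lx.
      pose proof (H2 y Hy) as Wy. pose proof (level_len _ _ _ Wy) as Ly.
      assert (cyx : childb y x = false).
      { destruct (childb y x) eqn:E; auto. apply childb_spec in E. lia. }
      assert (cxy : childb x y = false).
      { destruct (childb x y) eqn:E; auto. apply childb_spec in E. destruct E as [E1 E2].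
        destruct (level_S_inv _ _ _ Wy) as [w [c [-> Hw]]].
        assert (x = w).
        { rewrite <- E2. rewrite firstn_app. rewrite length_app in E1. simpl in E1.
          assert (length x = length w) by lia. rewrite H, Nat.sub_diag, firstn_all. simpl. apply app_nil_r. }
        subst. specialize (HB (w ++ [c]) Wy). rewrite removelast_last in HB.
        rewrite (proj2 (membP _ _) Hx), (proj2 (membP _ _) Hy) in HB. discriminate. }
      unfold adjb. rewrite cyx, cxy. auto. }
    destruct Hu as [Hu|Hu], Hv as [Hv|Hv].
    + apply HA; auto.
    + apply (proj1 (key u v Hu Hv)).
    + apply (proj2 (key v u Hv Hu)).
    + pose proof (level_len _ _ _ (H2 u Hu)). pose proof (level_len _ _ _ (H2 v Hv)).
      unfold adjb. destruct (childb u v) eqn:E. apply childb_spec in E; lia.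
      destruct (childb v u) eqn:E'. apply childb_spec in E'; lia. auto.
Qed.

Definition cons_ok (sigma : bcond) (v : list nat) (b : bool) : bool :=
  match sigma v with Some true => b | Some false => negb b | None => true end.

Definition Zg d lam sigma L (A : list nat -> bool -> R) (Pb : bool -> bool) : R :=
  sumR (map (fun I => indR (indepb I) * indR (consistentb d L sigma I) * indR (Pb (memb [] I))
     * lam ^ length I * prodR (map (fun v => A v (memb v I)) (level d L))) (subsets (verts d L))).

Lemma prodR_ones {X} (l : list X) : prodR (map (fun _ => 1) l) = 1.
Proof. induction l; simpl; auto. rewrite IHl; ring. Qed.

Lemma Zpart_Zg d lam L sigma Pb :
  Zpart d lam L sigma (fun I => Pb (memb [] I)) = Zg d lam sigma L (fun _ _ => 1) Pb.
Proof.
  unfold Zpart, Zg. rewrite sum_filter. f_equal. apply map_ext. intro I.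
  rewrite !indR_and, prodR_ones. ring.
Qed.

Lemma cons_split d L sigma I1 I2 :
  (forall x, In x I1 -> In x (verts d L)) ->
  (forall x, In x I2 -> In x (level d (S L))) ->
  consistentb d (S L) sigma (I1 ++ I2) = consistentb d L sigma I1 &&
     forallb (fun u => cons_ok sigma u (memb u I2)) (level d (S L)).
Proof.
  intros H1 H2. unfold consistentb. rewrite verts_S, forallb_app. f_equal.
  - apply forallb_ext_in. intros v Hv. rewrite memb_app.
    rewrite (memb_false v I2). rewrite orb_false_r. reflexivity.
    intro H. apply H2 in H. apply level_len in H. apply verts_len in Hv. lia.
  - apply forallb_ext_in. intros v Hv. rewrite memb_app.
    rewrite (memb_false v I1). reflexivity.
    intro H. apply H1 in H. apply verts_len in H. apply level_len in Hv. lia.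
Qed.

Definition Hf lam sigma (A : list nat -> bool -> R) u (b' b : bool) : R :=
  indR (negb (b && b')) * indR (cons_ok sigma u b') * (if b' then lam else 1) * A u b'.

Definition peelA d lam sigma (A : list nat -> bool -> R) (v : list nat) (b : bool) : R :=
  prodR (map (fun c => Hf lam sigma A (v ++ [c]) false b + Hf lam sigma A (v ++ [c]) true b)
    (seq 0 (d (length v)))).

Lemma prodR_map_mult4 {X} (l : list X) f g h k :
  prodR (map (fun x => f x * g x * h x * k x) l) =
  prodR (map f l) * prodR (map g l) * prodR (map h l) * prodR (map k l).
Proof. induction l; simpl; [ring| rewrite IHl; ring]. Qed.

Lemma peel d lam sigma L A Pb :
  Zg d lam sigma (S L) A Pb = Zg d lam sigma L (peelA d lam sigma A) Pb.
Proof.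
  unfold Zg. rewrite verts_S, sum_sub_app. f_equal. apply map_ext_in. intros I1 HI1.
  set (W := level d (S L)).
  assert (H1 : forall x, In x I1 -> In x (verts d L)) by (apply sub_incl; auto).
  rewrite (map_ext_in _ (fun I2 => (indR (indepb I1) * indR (consistentb d L sigma I1) *
        indR (Pb (memb [] I1)) * lam ^ length I1) *
        prodR (map (fun u => Hf lam sigma A u (memb u I2) (memb (removelast u) I1)) W))).
  2:{ intros I2 HI2. assert (H2 : forall x, In x I2 -> In x W) by (apply sub_incl; auto).
      rewrite (indep_split d L I1 I2), (cons_split d L sigma I1 I2) by auto.
      rewrite memb_app, (memb_false [] I2).
      2:{ intro H. apply H2 in H. apply level_len in H. simpl in H. lia. }
      rewrite orb_false_r, length_app, pow_add, (pow_sub W I2) by (auto; apply NoDup_level).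
      rewrite !indR_and, !indR_forallb.
      unfold Hf. rewrite prodR_map_mult4.
      rewrite (map_ext_in (fun v => A v (memb v (I1 ++ I2))) (fun u => A u (memb u I2))).
      2:{ intros u Hu. rewrite memb_app, memb_false. reflexivity.
          intro H. apply H1 in H. apply verts_len in H. apply level_len in Hu. lia. }
      unfold W. ring. }
  rewrite sumR_scal.
  pose proof (sum_prod_sub W (fun u b => Hf lam sigma A u b (memb (removelast u) I1)) (NoDup_level d (S L))) as E.
  cbv beta in E. rewrite E. f_equal.
  unfold W. simpl level at 1. rewrite prodR_flat_map. f_equal. apply map_ext_in. intros v Hv.
  unfold peelA. rewrite map_map, (level_len _ _ _ Hv). f_equal. apply map_ext. intro c.
  rewrite removelast_last. reflexivity.
Qed.

Fixpoint Tn d lam sigma (A : list nat -> bool -> R) (n : nat) (v : list nat) (b : bool) : R :=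
  match n with
  | O => A v b
  | S n' => prodR (map (fun c => Hf lam sigma (Tn d lam sigma A n') (v ++ [c]) false b
                                 + Hf lam sigma (Tn d lam sigma A n') (v ++ [c]) true b)
                      (seq 0 (d (length v))))
  end.

Lemma Tn_peel d lam sigma A n : Tn d lam sigma (peelA d lam sigma A) n = Tn d lam sigma A (S n).
Proof.
  induction n; simpl. reflexivity.
  apply functional_extensionality; intro v. apply functional_extensionality; intro b.
  rewrite IHn. reflexivity.
Qed.

Lemma Zg_iter d lam sigma k n A Pb :
  Zg d lam sigma (k + n) A Pb = Zg d lam sigma k (Tn d lam sigma A n) Pb.
Proof.
  revert A; induction n; intro A.
  - rewrite Nat.add_0_r. reflexivity.
  - rewrite Nat.add_succ_r, peel, IHn, Tn_peel. reflexivity.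
Qed.

Lemma Zg0 d lam sigma A Pb :
  Zg d lam sigma 0 A Pb =
  indR (cons_ok sigma [] false) * indR (Pb false) * A [] false
  + indR (cons_ok sigma [] true) * indR (Pb true) * lam * A [] true.
Proof.
  unfold Zg, consistentb, verts. simpl. unfold indR, cons_ok. simpl.
  destruct (sigma []) as [[|]|]; destruct (Pb false), (Pb true); simpl; ring.
Qed.

Definition base_p lam (sigma : bcond) v : R :=
  match sigma v with Some true => 0 | Some false => 1 | None => 1 / (1 + lam) end.

Fixpoint pr d lam (sigma : bcond) (n : nat) (v : list nat) : R :=
  match n with
  | O => base_p lam sigma v
  | S n' => match sigma v with
            | Some true => 0
            | Some false => 1
            | None => 1 / (1 + lam * prodR (map (fun c => pr d lam sigma n' (v ++ [c]))
                                                 (seq 0 (d (length v)))))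
            end
  end.

Definition one : list nat -> bool -> R := fun _ _ => 1.
Definition Uv d lam sigma n v := indR (cons_ok sigma v false) * Tn d lam sigma one n v false.
Definition Ov d lam sigma n v := indR (cons_ok sigma v true) * lam * Tn d lam sigma one n v true.

Lemma T_S_false d lam sigma n v :
  Tn d lam sigma one (S n) v false =
  prodR (map (fun c => Uv d lam sigma n (v ++ [c]) + Ov d lam sigma n (v ++ [c])) (seq 0 (d (length v)))).
Proof. simpl. f_equal. apply map_ext. intro c. unfold Hf, Uv, Ov, indR. simpl. ring. Qed.

Lemma T_S_true d lam sigma n v :
  Tn d lam sigma one (S n) v true =
  prodR (map (fun c => Uv d lam sigma n (v ++ [c])) (seq 0 (d (length v)))).
Proof. simpl. f_equal. apply map_ext. intro c. unfold Hf, Uv, Ov, indR. simpl. ring. Qed.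

Lemma prodR_pos {X} (l : list X) f : (forall x, In x l -> 0 < f x) -> 0 < prodR (map f l).
Proof. induction l; simpl; intros H. lra. apply Rmult_lt_0_compat; auto. Qed.
Lemma prodR_nonneg {X} (l : list X) f : (forall x, In x l -> 0 <= f x) -> 0 <= prodR (map f l).
Proof. induction l; simpl; intros H. lra. apply Rmult_le_pos; auto. Qed.
Lemma prodR_div {X} (l : list X) f g : (forall x, In x l -> g x <> 0) ->
  prodR (map (fun x => f x / g x) l) = prodR (map f l) / prodR (map g l).
Proof.
  induction l; simpl; intros H. field.
  rewrite IHl by auto.
  assert (prodR (map g l) <> 0).
  { clear IHl. induction l; simpl. lra. apply Rmult_integral_contrapositive; split; auto. apply H; simpl; auto.
    apply IHl. intros; apply H; simpl in *; tauto. }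
  field. split; auto.
Qed.

Lemma bok_adj d L sigma u v : boundary_ok d L sigma -> In u (verts d L) -> In v (verts d L) ->
  sigma u = Some true -> sigma v = Some true -> adjb u v = false.
Proof.
  unfold boundary_ok. intros H Hu Hv Su Sv. apply indepb_spec with (u := u) (v := v) in H; auto.
  - apply filter_In. rewrite Su. auto.
  - apply filter_In. rewrite Sv. auto.
Qed.

Lemma pr_UO d lam L sigma : 0 < lam -> boundary_ok d L sigma ->
  forall n k v, In v (level d k) -> (k + n = L)%nat ->
  0 <= Uv d lam sigma n v /\ 0 <= Ov d lam sigma n v /\
  0 < Uv d lam sigma n v + Ov d lam sigma n v /\
  (sigma v <> Some true -> 0 < Uv d lam sigma n v) /\
  pr d lam sigma n v = Uv d lam sigma n v / (Uv d lam sigma n v + Ov d lam sigma n v).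
Proof.
  intros Hl Hb. induction n; intros k v Hv Hk.
  - unfold Uv, Ov, cons_ok, indR. simpl. unfold one, base_p.
    destruct (sigma v) as [[|]|]; simpl; repeat split; try intro; try lra;
      try congruence; field; lra.
  - assert (Hc : forall c, In c (seq 0 (d (length v))) -> In (v ++ [c]) (level d (S k))).
    { intros c Hc. apply in_seq in Hc. apply level_S_in. auto. rewrite (level_len _ _ _ Hv) in Hc. lia. }
    assert (IH : forall c, In c (seq 0 (d (length v))) ->
      0 <= Uv d lam sigma n (v ++ [c]) /\ 0 <= Ov d lam sigma n (v ++ [c]) /\
      0 < Uv d lam sigma n (v ++ [c]) + Ov d lam sigma n (v ++ [c]) /\
      (sigma (v ++ [c]) <> Some true -> 0 < Uv d lam sigma n (v ++ [c])) /\
      pr d lam sigma n (v ++ [c]) = Uv d lam sigma n (v ++ [c]) / (Uv d lam sigma n (v ++ [c]) + Ov d lam sigma n (v ++ [c]))).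
    { intros c Hc'. apply (IHn (S k)); auto. lia. }
    assert (P1 : 0 < Tn d lam sigma one (S n) v false).
    { rewrite T_S_false. apply prodR_pos. intros c Hc'. apply IH; auto. }
    assert (P2 : 0 <= Tn d lam sigma one (S n) v true).
    { rewrite T_S_true. apply prodR_nonneg. intros c Hc'. apply IH; auto. }
    assert (Q : prodR (map (fun c => pr d lam sigma n (v ++ [c])) (seq 0 (d (length v)))) =
                Tn d lam sigma one (S n) v true / Tn d lam sigma one (S n) v false).
    { rewrite T_S_false, T_S_true.
      rewrite (map_ext_in (fun c => pr d lam sigma n (v ++ [c]))
         (fun c => Uv d lam sigma n (v ++ [c]) / (Uv d lam sigma n (v ++ [c]) + Ov d lam sigma n (v ++ [c])))).
      2:{ intros c Hc'. apply IH; auto. }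
      apply prodR_div. intros c Hc'. pose proof (IH c Hc'). lra. }
    assert (P3 : sigma v = Some true -> 0 < Tn d lam sigma one (S n) v true).
    { intro Sv. rewrite T_S_true. apply prodR_pos. intros c Hc'. apply IH; auto.
        intro Sc. assert (adjb v (v ++ [c]) = false).
        { apply (bok_adj d L sigma); auto.
          - apply (level_in_verts d L k); auto. lia.
          - apply (level_in_verts d L (S k)); auto. lia. }
        unfold adjb in H. rewrite childb_parent in H. discriminate. }
    unfold Uv, Ov, cons_ok, indR. simpl pr. rewrite Q.
    set (Tf := Tn d lam sigma one (S n) v false) in *.
    set (Tt := Tn d lam sigma one (S n) v true) in *.
    destruct (sigma v) as [[|]|] eqn:Sv; cbn [negb].
    + specialize (P3 eq_refl).
      split; [nra|split;[nra|split;[nra|split;[congruence|field; nra]]]].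
    + split; [nra|split;[nra|split;[nra|split;[intros; nra|field; nra]]]].
    + split; [nra|split;[nra|split;[nra|split;[intros; nra|]]]].
      field. split; nra.
Qed.

Lemma prob_pr d lam L sigma : 0 < lam -> boundary_ok d L sigma ->
  prob_root d lam L sigma = 1 - pr d lam sigma L [].
Proof.
  intros Hl Hb. unfold prob_root.
  pose proof (pr_UO d lam L sigma Hl Hb L 0 [] (or_introl eq_refl) eq_refl) as [H1 [H2 [H3 [_ H5]]]].
  assert (Z1 : Zpart d lam L sigma (memb []) = Zg d lam sigma (0 + L) one (fun b => b))
    by exact (Zpart_Zg d lam L sigma (fun b => b)).
  assert (Z2 : Zpart d lam L sigma (fun _ => true) = Zg d lam sigma (0 + L) one (fun _ => true))
    by exact (Zpart_Zg d lam L sigma (fun _ => true)).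
  rewrite Z1, Z2, !Zg_iter, !Zg0, H5.
  unfold Uv, Ov in *. unfold indR at 2 4 6 8. field. lra.
Qed.

Lemma Rratio_pr d lam L sigma : 0 < lam -> boundary_ok d L sigma ->
  Rratio d lam L sigma = (1 - pr d lam sigma L []) / (1 - (1 - pr d lam sigma L [])).
Proof. intros Hl Hb. unfold Rratio. cbv zeta. rewrite prob_pr; auto. Qed.

Lemma exp_ge_1p x : 1 + x <= exp x.
Proof. destruct (Req_dec x 0). subst. rewrite exp_0. lra. left. apply exp_ineq1; auto. Qed.

Lemma exp_convex t A B : 0 <= t <= 1 -> exp (t * A + (1 - t) * B) <= t * exp A + (1 - t) * exp B.
Proof.
  intros Ht. set (m := t * A + (1 - t) * B).
  assert (EA : exp A = exp m * exp (A - m)) by (rewrite <- exp_plus; f_equal; ring).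
  assert (EB : exp B = exp m * exp (B - m)) by (rewrite <- exp_plus; f_equal; ring).
  pose proof (exp_ge_1p (A - m)). pose proof (exp_ge_1p (B - m)). pose proof (exp_pos m).
  rewrite EA, EB.
  assert (t * (exp m * exp (A - m)) + (1 - t) * (exp m * exp (B - m)) >=
          t * (exp m * (1 + (A - m))) + (1 - t) * (exp m * (1 + (B - m)))).
  { apply Rle_ge, Rplus_le_compat; apply Rmult_le_compat_l; try lra;
    apply Rmult_le_compat_l; lra. }
  assert (t * (exp m * (1 + (A - m))) + (1 - t) * (exp m * (1 + (B - m))) = exp m) by (unfold m; ring).
  lra.
Qed.

Definition pw (x y : R) : R := if Rle_dec x 0 then 0 else exp (y * ln x).

Lemma pw_nonneg x y : 0 <= pw x y.
Proof. unfold pw. destruct (Rle_dec x 0). lra. left; apply exp_pos. Qed.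
Lemma pw_pos x y : 0 < x -> pw x y = exp (y * ln x).
Proof. intro H. unfold pw. destruct (Rle_dec x 0); [lra|auto]. Qed.
Lemma pw_0 y : pw 0 y = 0.
Proof. unfold pw. destruct (Rle_dec 0 0); lra. Qed.

Lemma young x y p q : 0 <= x -> 0 <= y -> 0 < p -> 0 < q -> / p + / q = 1 ->
  x * y <= pw x p / p + pw y q / q.
Proof.
  intros Hx Hy Hp Hq Hpq.
  pose proof (pw_nonneg x p). pose proof (pw_nonneg y q).
  assert (0 <= pw x p / p) by (apply Rdiv_le_0_compat; lra).
  assert (0 <= pw y q / q) by (apply Rdiv_le_0_compat; lra).
  destruct Hx as [Hx|Hx]; [|subst; lra]. destruct Hy as [Hy|Hy]; [|subst; lra].
  rewrite !pw_pos by auto.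
  replace (x * y) with (exp (/ p * (p * ln x) + (1 - / p) * (q * ln y))).
  2:{ replace (1 - / p) with (/ q) by lra. rewrite <- (exp_ln x) at 2 by auto.
      rewrite <- (exp_ln y) at 2 by auto. rewrite <- exp_plus. f_equal. field. lra. }
  assert (0 < / p) by (apply Rinv_0_lt_compat; auto). assert (0 < / q) by (apply Rinv_0_lt_compat; auto).
  eapply Rle_trans. apply exp_convex. lra.
  replace (1 - / p) with (/ q) by lra. unfold Rdiv. lra.
Qed.

Lemma concave_tangent (f f' : R -> R) :
  (forall x, is_derive f x (f' x)) -> (forall x y, x <= y -> f' y <= f' x) ->
  forall x x0, f x <= f x0 + f' x0 * (x - x0).
Proof.
  intros Hd Hm x x0.
  destruct (MVT_gen f x0 x f') as [c [Hc E]].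
  - intros; apply Hd.
  - intros y _. apply continuity_pt_filterlim. apply (ex_derive_continuous f y). eexists; apply Hd.
  - assert (f x - f x0 <= f' x0 * (x - x0)); [|lra].
    rewrite E. destruct (Rle_dec x0 x).
    + rewrite Rmin_left, Rmax_right in Hc by lra. apply Rmult_le_compat_r. lra. apply Hm. lra.
    + rewrite Rmin_right, Rmax_left in Hc by lra.
      assert (f' x0 <= f' c) by (apply Hm; lra). nra.
Qed.

Definition phi1 (x : R) := ln (1 - exp (- exp x)).
Definition phi1' (x : R) := exp x / (exp (exp x) - 1).

Lemma exp_gt1 y : 0 < y -> 1 < exp y.
Proof. intro H. pose proof (exp_ineq1 y). lra. Qed.

Lemma phi1_derive x : is_derive phi1 x (phi1' x).
Proof.
  unfold phi1, phi1'.
  assert (H1 : exp (- exp x) < 1).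
  { rewrite <- exp_0. apply exp_increasing. pose proof (exp_pos x). lra. }
  assert (H2 : 1 < exp (exp x)) by (apply exp_gt1, exp_pos).
  auto_derive. lra.
  rewrite exp_Ropp. field. split. lra. pose proof (exp_pos (exp x)).
  intro. assert (/ exp (exp x) * exp (exp x) = 1) by (field; lra). nra.
Qed.

Lemma phi1'_decr x y : x <= y -> phi1' y <= phi1' x.
Proof.
  intro H. unfold phi1'. set (Y1 := exp x). set (Y2 := exp y).
  assert (P1 : 0 < Y1) by apply exp_pos. assert (P2 : 0 < Y2) by apply exp_pos.
  assert (Y1 <= Y2). { unfold Y1, Y2. destruct H as [H|H]. left; apply exp_increasing; auto. subst; lra. }
  assert (E1 : 1 < exp Y1) by (apply exp_gt1; auto). assert (E2 : 1 < exp Y2) by (apply exp_gt1; auto).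
  assert (C : exp Y1 - 1 <= Y1 / Y2 * (exp Y2 - 1)).
  { pose proof (exp_convex (Y1 / Y2) Y2 0) as Hc.
    assert (0 <= Y1 / Y2 <= 1). { split. apply Rdiv_le_0_compat; lra. unfold Rdiv. apply (Rmult_le_reg_r Y2); [lra|].
      rewrite Rmult_assoc, Rinv_l by lra. lra. }
    specialize (Hc H1). replace (Y1 / Y2 * Y2 + (1 - Y1 / Y2) * 0) with Y1 in Hc by (field; lra).
    rewrite exp_0 in Hc. lra. }
  apply Rmult_le_reg_r with ((exp Y2 - 1) * (exp Y1 - 1)). nra.
  replace (Y2 / (exp Y2 - 1) * ((exp Y2 - 1) * (exp Y1 - 1))) with (Y2 * (exp Y1 - 1)) by (field; lra).
  replace (Y1 / (exp Y1 - 1) * ((exp Y2 - 1) * (exp Y1 - 1))) with (Y1 * (exp Y2 - 1)) by (field; lra).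
  apply Rmult_le_compat_l with (r := Y2) in C; [|lra].
  replace (Y2 * (Y1 / Y2 * (exp Y2 - 1))) with (Y1 * (exp Y2 - 1)) in C by (field; lra). lra.
Qed.

Definition Kf (lam S : R) := lam * exp (- S) / (1 + lam * exp (- S)).
Definition phi2 lam (x : R) := ln (Kf lam (exp x)).
Definition phi2' lam (x : R) := - exp x / (1 + lam * exp (- exp x)).

Lemma phi2_derive lam x : 0 < lam -> is_derive (phi2 lam) x (phi2' lam x).
Proof.
  intro Hl. unfold phi2, phi2', Kf.
  assert (H1 : 0 < exp (- exp x)) by apply exp_pos.
  auto_derive. repeat split; try (apply Rdiv_lt_0_compat); try nra.
  field. nra.
Qed.

Lemma phi2'_decr lam x y : 0 < lam -> x <= y -> phi2' lam y <= phi2' lam x.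
Proof.
  intros Hl H. unfold phi2'.
  assert (A1 : exp x <= exp y). { destruct H as [H|H]. left; apply exp_increasing; auto. subst; lra. }
  assert (A2 : exp (- exp y) <= exp (- exp x)).
  { destruct (Req_dec (exp x) (exp y)) as [E|E]. rewrite E; lra. left; apply exp_increasing. lra. }
  pose proof (exp_pos (- exp y)). pose proof (exp_pos (- exp x)). pose proof (exp_pos x).
  unfold Rdiv. rewrite !Ropp_mult_distr_l_reverse. apply Ropp_le_contravar.
  apply Rmult_le_compat; try lra.
  left; apply Rinv_0_lt_compat; nra.
  apply Rinv_le_contravar; nra.
Qed.

Definition a0 D := ln (D / (D - 1)).
Definition rr D := / ((D - 1) * a0 D).
Definition lc D := exp (D * a0 D) / (D - 1).

Lemma a0_pos D : 1 < D -> 0 < a0 D.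
Proof.
  intro H. unfold a0. rewrite <- ln_1. apply ln_increasing. lra.
  apply (Rmult_lt_reg_r (D - 1)). lra. field_simplify; lra.
Qed.
Lemma exp_a0 D : 1 < D -> exp (a0 D) = D / (D - 1).
Proof. intro H. unfold a0. apply exp_ln. apply Rdiv_lt_0_compat; lra. Qed.

Lemma KL D lam a S : 1 < D -> 0 < lam <= lc D -> 0 < a -> 0 < S ->
  ln (S / a) + rr D * ln (1 - exp (- a)) + rr D * ln (Kf lam S)
  <= rr D * ln (lam * (1 + lc D) / (lc D * (1 + lam))) + (1 - 2 * rr D) * ln D.
Proof.
  intros HD Hl Ha HS.
  pose proof (a0_pos D HD) as Ha0. pose proof (exp_a0 D HD) as Ea0.
  set (A := a0 D) in *. set (R0 := rr D). set (LC := lc D).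
  assert (HR : R0 * ((D - 1) * A) = 1) by (unfold R0, rr; fold A; field; split; lra).
  assert (HR0 : 0 < R0) by (unfold R0, rr; apply Rinv_0_lt_compat; fold A; nra).
  assert (HLC : 0 < LC) by (unfold LC, lc; apply Rdiv_lt_0_compat; [apply exp_pos|lra]).
  pose proof (concave_tangent phi1 phi1' phi1_derive phi1'_decr (ln a) (ln A)) as T1.
  unfold phi1 in T1. rewrite !exp_ln in T1 by auto.
  assert (E1 : phi1' (ln A) = (D - 1) * A).
  { unfold phi1'. rewrite exp_ln by auto. fold A in Ea0. rewrite Ea0. field. split; lra. }
  rewrite E1 in T1.
  assert (E2 : 1 - exp (- A) = / D).
  { rewrite exp_Ropp. fold A in Ea0. rewrite Ea0. field. lra. }
  rewrite E2 in T1.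
  set (u0 := D * A).
  assert (Hu0 : 0 < u0) by (unfold u0; nra).
  pose proof (concave_tangent (phi2 LC) (phi2' LC) (fun x => phi2_derive LC x HLC)
                (fun x y H => phi2'_decr LC x y HLC H) (ln S) (ln u0)) as T2.
  unfold phi2 in T2. rewrite !exp_ln in T2 by auto.
  assert (Eu : LC * exp (- u0) = / (D - 1)).
  { unfold LC, lc, u0. fold A. rewrite exp_Ropp. field. split. lra. apply Rgt_not_eq, exp_pos. }
  assert (E3 : phi2' LC (ln u0) = - ((D - 1) * A)).
  { unfold phi2'. rewrite exp_ln by auto. rewrite Eu. unfold u0. field. split; lra. }
  assert (E4 : Kf LC u0 = / D). { unfold Kf. rewrite Eu. field. split; lra. }
  rewrite E3, E4 in T2.
  assert (M : ln (Kf lam S) <= ln (lam * (1 + LC) / (LC * (1 + lam))) + ln (Kf LC S)).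
  { assert (Kpos : forall l, 0 < l -> 0 < Kf l S).
    { intros l Hl'. unfold Kf. pose proof (exp_pos (- S)). apply Rdiv_lt_0_compat; nra. }
    rewrite <- ln_mult. 2:{ apply Rdiv_lt_0_compat; nra. } 2:{ apply Kpos; lra. }
    apply ln_le. apply Kpos; lra.
    unfold Kf. pose proof (exp_pos (- S)) as P.
    set (e := exp (- S)) in *.
    assert (0 < lam * e) by nra. assert (0 < LC * e) by nra.
    apply (Rmult_le_reg_r ((1 + lam * e) * (1 + LC * e) * LC * (1 + lam))).
    { apply Rmult_lt_0_compat; [|lra]. apply Rmult_lt_0_compat; [|lra]. apply Rmult_lt_0_compat; lra. }
    assert (e <= 1). { unfold e. rewrite <- exp_0. destruct (Req_dec S 0). subst. lra. left; apply exp_increasing; lra. }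
    assert (lam <= LC) by (unfold LC; lra). assert (0 <= (LC - lam) * (1 - e)) by (apply Rmult_le_pos; lra).
    assert (0 < lam * e * LC) by (apply Rmult_lt_0_compat; lra).
    field_simplify; try lra. nra. }
  rewrite ln_div by auto.
  assert (LD : ln u0 - ln A = ln D). { unfold u0. rewrite ln_mult by lra. ring. }
  rewrite ln_Rinv in T1, T2 by lra.
  assert (S1 : R0 * ln (1 - exp (- a)) <= R0 * (- ln D) + (ln a - ln A)).
  { apply Rmult_le_compat_l with (r := R0) in T1; [|lra].
    replace (R0 * (- ln D + (D - 1) * A * (ln a - ln A))) with (R0 * - ln D + (R0 * ((D - 1) * A)) * (ln a - ln A)) in T1 by ring.
    rewrite HR in T1. lra. }
  assert (S2 : R0 * ln (Kf lam S) <= R0 * ln (lam * (1 + LC) / (LC * (1 + lam))) + R0 * (- ln D) - (ln S - ln u0)).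
  { apply Rmult_le_compat_l with (r := R0) in T2; [|lra].
    apply Rmult_le_compat_l with (r := R0) in M; [|lra].
    replace (R0 * (- ln D + - ((D - 1) * A) * (ln S - ln u0))) with (R0 * - ln D - (R0 * ((D - 1) * A)) * (ln S - ln u0)) in T2 by ring.
    rewrite HR in T2. lra. }
  lra.
Qed.


Definition lncosh y := ln (cosh y).
Definition th y := sinh y / cosh y.
Definition asinh z := ln (z + sqrt (z * z + 1)).

Lemma cosh_pos y : 0 < cosh y.
Proof. unfold cosh. pose proof (exp_pos y). pose proof (exp_pos (- y)). lra. Qed.

Lemma lncosh_derive y : is_derive lncosh y (th y).
Proof.
  unfold lncosh, th, cosh, sinh. pose proof (exp_pos y). pose proof (exp_pos (- y)).
  auto_derive. lra. field. lra.
Qed.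

Lemma sqrt_gt z : Rabs z < sqrt (z * z + 1).
Proof.
  rewrite <- sqrt_Rsqr_abs. apply sqrt_lt_1. apply Rle_0_sqr. nra. unfold Rsqr. lra.
Qed.

Lemma asinh_pos_arg z : 0 < z + sqrt (z * z + 1).
Proof. pose proof (sqrt_gt z). pose proof (Rle_abs (- z)). rewrite Rabs_Ropp in H0. lra. Qed.

Lemma asinh_derive z : is_derive asinh z (/ sqrt (z * z + 1)).
Proof.
  unfold asinh. pose proof (asinh_pos_arg z).
  assert (0 < sqrt (z * z + 1)) by (apply sqrt_lt_R0; nra).
  auto_derive. split. nra. split; auto.
  field. split; lra.
Qed.

Lemma is_derive_eq (f : R -> R) x a b : is_derive f x a -> a = b -> is_derive f x b.
Proof. intros H <-. auto. Qed.

Definition lin (t : R) (p : R * R) := snd p + t * (fst p - snd p).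
Definition SL ps t := sumR (map (fun p => lncosh (lin t p)) ps).

Lemma SL_derive ps t : is_derive (SL ps) t (sumR (map (fun p => th (lin t p) * (fst p - snd p)) ps)).
Proof.
  induction ps as [|p ps IH]; simpl.
  - unfold SL; simpl. auto_derive; auto.
  - unfold SL; simpl. eapply is_derive_eq.
    apply (is_derive_plus (fun t => lncosh (lin t p)) (fun t => SL ps t)); [|apply IH].
    unfold lin. apply (is_derive_comp lncosh (fun t => snd p + t * (fst p - snd p))).
    apply lncosh_derive. auto_derive; auto.
    unfold plus, scal; simpl. unfold mult, lin; simpl. ring.
Qed.

Definition sfun lam ps t := sqrt lam * exp (- SL ps t).
Definition Gt lam ps t := asinh (sfun lam ps t).

Lemma Gt_derive lam ps t :
  is_derive (Gt lam ps) t
    (/ sqrt (sfun lam ps t * sfun lam ps t + 1) *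
     (sfun lam ps t * - sumR (map (fun p => th (lin t p) * (fst p - snd p)) ps))).
Proof.
  unfold Gt. eapply is_derive_eq.
  apply (is_derive_comp asinh (sfun lam ps)). apply asinh_derive.
  unfold sfun. apply (is_derive_scal (fun t => exp (- SL ps t))).
  apply (is_derive_comp exp (fun t => - SL ps t)). apply is_derive_exp.
  apply (is_derive_opp (SL ps)). apply SL_derive.
  unfold opp, scal; simpl. unfold mult; simpl. unfold sfun. ring.
Qed.

Definition Gm lam ys := asinh (sqrt lam * exp (- sumR (map lncosh ys))).
Definition kap lam zs := let s := sqrt lam * exp (- sumR (map lncosh zs)) in s / sqrt (s * s + 1).

Lemma th_nonneg y : 0 <= y -> 0 <= th y.
Proof.
  intro H. unfold th. apply Rdiv_le_0_compat; [|apply cosh_pos]. unfold sinh.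
  assert (exp (- y) <= exp y). { destruct H as [H|H]. left; apply exp_increasing; lra. subst. rewrite Ropp_0. lra. }
  lra.
Qed.

Lemma sumR_abs_le {X} (l : list X) f g : (forall x, In x l -> Rabs (f x) <= g x) ->
  Rabs (sumR (map f l)) <= sumR (map g l).
Proof.
  induction l; simpl; intros H. rewrite Rabs_R0; lra.
  eapply Rle_trans. apply Rabs_triang. apply Rplus_le_compat; auto.
Qed.

Lemma vertex_mvt lam ps : 0 < lam -> (forall p, In p ps -> 0 <= fst p /\ 0 <= snd p) ->
  exists c, 0 <= c <= 1 /\
  Rabs (Gm lam (map fst ps) - Gm lam (map snd ps)) <=
  sumR (map (fun p => kap lam (map (lin c) ps) * th (lin c p) * Rabs (fst p - snd p)) ps).
Proof.
  intros Hl Hps.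
  destruct (MVT_gen (Gt lam ps) 0 1 _ (fun t _ => Gt_derive lam ps t)) as [c [Hc E]].
  - intros y _. apply continuity_pt_filterlim. apply (ex_derive_continuous (Gt lam ps) y).
    eexists; apply Gt_derive.
  - rewrite Rmin_left, Rmax_right in Hc by lra.
    exists c. split; auto.
    assert (G1 : Gt lam ps 1 = Gm lam (map fst ps)).
    { unfold Gt, Gm, sfun, SL. rewrite map_map. do 5 f_equal. apply map_ext. intro p. unfold lin. f_equal. ring. }
    assert (G0 : Gt lam ps 0 = Gm lam (map snd ps)).
    { unfold Gt, Gm, sfun, SL. rewrite map_map. do 5 f_equal. apply map_ext. intro p. unfold lin. f_equal. ring. }
    rewrite <- G1, <- G0, E, Rminus_0_r, Rmult_1_r.
    set (s := sfun lam ps c).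
    assert (Hs : 0 < s) by (unfold s, sfun; apply Rmult_lt_0_compat; [apply sqrt_lt_R0; auto| apply exp_pos]).
    assert (Hq : 0 < sqrt (s * s + 1)) by (apply sqrt_lt_R0; nra).
    assert (K : kap lam (map (lin c) ps) = s / sqrt (s * s + 1)).
    { unfold kap, s, sfun, SL. rewrite map_map. reflexivity. }
    rewrite K.
    replace (/ sqrt (s * s + 1) * (s * - sumR (map (fun p => th (lin c p) * (fst p - snd p)) ps)))
      with (- (s / sqrt (s * s + 1) * sumR (map (fun p => th (lin c p) * (fst p - snd p)) ps))) by (unfold Rdiv; ring).
    rewrite Rabs_Ropp, Rabs_mult, (Rabs_right (s / sqrt (s * s + 1))).
    2:{ apply Rle_ge, Rdiv_le_0_compat; lra. }
    assert (Hk : 0 <= s / sqrt (s * s + 1)) by (apply Rdiv_le_0_compat; lra).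
    assert (SC : forall l : list (R * R), sumR (map (fun p => s / sqrt (s * s + 1) * th (lin c p) * Rabs (fst p - snd p)) l)
       = s / sqrt (s * s + 1) * sumR (map (fun p => th (lin c p) * Rabs (fst p - snd p)) l)).
    { induction l; simpl. ring. rewrite IHl. ring. }
    rewrite SC. apply Rmult_le_compat_l; auto.
    apply sumR_abs_le. intros p Hp. rewrite Rabs_mult. rewrite Rabs_right. lra.
    apply Rle_ge, th_nonneg. unfold lin. destruct (Hps p Hp). nra.
Qed.

Lemma pw_scal x mu p : 0 <= x -> 0 < mu -> pw (x * mu) p = pw x p * exp (p * ln mu).
Proof.
  intros Hx Hm. destruct Hx as [Hx|Hx].
  - rewrite !pw_pos by nra. rewrite ln_mult by auto. rewrite <- exp_plus. f_equal. ring.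
  - subst. rewrite Rmult_0_l, pw_0. ring.
Qed.

Lemma pw_zero_inv y q : 0 <= y -> pw y q = 0 -> y = 0.
Proof. intros H E. destruct H as [H|H]; auto. rewrite pw_pos in E by auto. pose proof (exp_pos (q * ln y)). lra. Qed.

Lemma sumR_nonneg {X} (l : list X) f : (forall x, In x l -> 0 <= f x) -> 0 <= sumR (map f l).
Proof. induction l; simpl; intros H. lra. pose proof (H a (or_introl eq_refl)). pose proof (IHl (fun x h => H x (or_intror h))). lra. Qed.
Lemma sumR_le {X} (l : list X) f g : (forall x, In x l -> f x <= g x) -> sumR (map f l) <= sumR (map g l).
Proof. induction l; simpl; intros H. lra. pose proof (H a (or_introl eq_refl)). pose proof (IHl (fun x h => H x (or_intror h))). lra. Qed.
Lemma sumR_zero {X} (l : list X) f : (forall x, In x l -> 0 <= f x) -> sumR (map f l) = 0 -> forall x, In x l -> f x = 0.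
Proof.
  induction l; simpl; intros H E x Hx. destruct Hx.
  pose proof (H a (or_introl eq_refl)). pose proof (sumR_nonneg l f (fun x h => H x (or_intror h))).
  destruct Hx as [<-|Hx]. lra. apply IHl; auto. lra.
Qed.
Lemma sumR_scal' {X} (l : list X) c f : sumR (map (fun x => c * f x) l) = c * sumR (map f l).
Proof. induction l; simpl; [ring| rewrite IHl; ring]. Qed.
Lemma sumR_plus' {X} (l : list X) f g : sumR (map (fun x => f x + g x) l) = sumR (map f l) + sumR (map g l).
Proof. induction l; simpl; [ring| rewrite IHl; ring]. Qed.

Lemma holder_q (l : list (R * R)) (E beta p q : R) :
  1 < p -> 1 < q -> / p + / q = 1 -> 0 < beta ->
  (forall x, In x l -> 0 <= fst x /\ 0 <= snd x) ->
  E <= sumR (map (fun x => fst x * snd x) l) ->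
  sumR (map (fun x => pw (fst x) p) l) <= beta ->
  pw E q <= exp ((q - 1) * ln beta) * sumR (map (fun x => pw (snd x) q) l).
Proof.
  intros Hp Hq Hpq Hb Hl HE Hc.
  set (Y := sumR (map (fun x => pw (snd x) q) l)).
  assert (HY : 0 <= Y) by (apply sumR_nonneg; intros; apply pw_nonneg).
  destruct (Rle_dec E 0) as [E0|E0].
  { unfold pw at 1. destruct (Rle_dec E 0); [|lra]. pose proof (exp_pos ((q - 1) * ln beta)). nra. }
  destruct HY as [HY|HY].
  2:{ exfalso. assert (forall x, In x l -> snd x = 0).
      { intros x Hx. apply (pw_zero_inv _ q). apply Hl; auto.
        apply (sumR_zero l (fun x => pw (snd x) q)); auto. intros; apply pw_nonneg. }
      assert (sumR (map (fun x => fst x * snd x) l) = 0).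
      { clear -H. induction l; simpl; auto. rewrite H by (simpl; auto). rewrite IHl. ring. intros; apply H; simpl; auto. }
      lra. }
  set (m := (ln Y - ln beta) / (p + q)). set (mu := exp m).
  assert (Hmu : 0 < mu) by apply exp_pos.
  set (X := (p * ln Y + q * ln beta) / (p + q)).
  assert (Hsum : E <= exp X).
  { eapply Rle_trans. apply HE.
    eapply Rle_trans. apply (sumR_le l _ (fun x => exp (p * m) / p * pw (fst x) p + exp (- q * m) / q * pw (snd x) q)).
    { intros x Hx. destruct (Hl x Hx) as [H1 H2].
      replace (fst x * snd x) with ((fst x * mu) * (snd x * / mu)) by (field; lra).
      eapply Rle_trans. apply (young _ _ p q); [apply Rmult_le_pos; lra | apply Rmult_le_pos; [lra| left; apply Rinv_0_lt_compat; lra] | lra | lra | lra].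
      rewrite !pw_scal by (auto; apply Rinv_0_lt_compat; auto).
      unfold mu. rewrite ln_Rinv by apply exp_pos. rewrite ln_exp. right.
      replace (q * - m) with (- q * m) by ring. field; lra. }
    rewrite sumR_plus', !sumR_scal'. fold Y.
    assert (exp (p * m) / p * beta + exp (- q * m) / q * Y = exp X).
    { replace (exp (p * m) / p * beta) with (/ p * exp (p * m + ln beta)).
      2:{ rewrite exp_plus, exp_ln by auto. field; lra. }
      replace (exp (- q * m) / q * Y) with (/ q * exp (- q * m + ln Y)).
      2:{ rewrite exp_plus, exp_ln by auto. field; lra. }
      replace (p * m + ln beta) with X by (unfold X, m; field; lra).
      replace (- q * m + ln Y) with X by (unfold X, m; field; lra).
      rewrite <- Rmult_plus_distr_r, Hpq. ring. }
    assert (0 <= exp (p * m) / p) by (left; apply Rdiv_lt_0_compat; [apply exp_pos|lra]).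
    nra. }
  rewrite pw_pos by lra.
  assert (q * ln E <= q * X).
  { apply Rmult_le_compat_l. lra. rewrite <- (ln_exp X). apply ln_le; lra. }
  assert (Epq : p + q = p * q).
  { replace (p + q) with (p * q * (/ p + / q)) by (field; lra). rewrite Hpq. ring. }
  assert (Eq : q * / p = q - 1).
  { replace (/ p) with (1 - / q) by lra. field. lra. }
  assert (EX : q * X = ln Y + (q - 1) * ln beta).
  { unfold X. rewrite Epq, <- Eq. field. lra. }
  eapply Rle_trans with (exp (q * X)).
  { destruct (Req_dec (q * ln E) (q * X)) as [e|e]. rewrite e; lra. left; apply exp_increasing; lra. }
  rewrite EX, exp_plus, exp_ln by auto. lra.
Qed.

Lemma exp_le x y : x <= y -> exp x <= exp y.
Proof. intro H. destruct H as [H|H]. left; apply exp_increasing; auto. subst; lra. Qed.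

Lemma cosh_sinh y : cosh y * cosh y - sinh y * sinh y = 1.
Proof.
  unfold cosh, sinh. assert (exp y * exp (- y) = 1) by (rewrite <- exp_plus, Rplus_opp_r, exp_0; auto).
  nra.
Qed.

Lemma cosh_ge1 y : 1 <= cosh y.
Proof.
  unfold cosh. pose proof (exp_ge_1p y). pose proof (exp_ge_1p (- y)). lra.
Qed.
Lemma cosh_gt1 y : y <> 0 -> 1 < cosh y.
Proof.
  intro H. unfold cosh. pose proof (exp_ineq1 y H). assert (- y <> 0) by lra.
  pose proof (exp_ineq1 (- y) H1). lra.
Qed.
Lemma lncosh_nonneg y : 0 <= lncosh y.
Proof. unfold lncosh. rewrite <- ln_1. apply ln_le. lra. apply cosh_ge1. Qed.
Lemma lncosh_pos y : y <> 0 -> 0 < lncosh y.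
Proof. intro H. unfold lncosh. rewrite <- ln_1. apply ln_increasing. lra. apply cosh_gt1; auto. Qed.

Lemma exp_m2lncosh y : exp (- (2 * lncosh y)) = / (cosh y * cosh y).
Proof.
  unfold lncosh. replace (- (2 * ln (cosh y))) with (- (ln (cosh y) + ln (cosh y))) by ring.
  rewrite <- ln_mult by apply cosh_pos. rewrite exp_Ropp, exp_ln. auto.
  pose proof (cosh_pos y). nra.
Qed.

Lemma th_sq y : th y * th y = 1 - exp (- (2 * lncosh y)).
Proof.
  rewrite exp_m2lncosh. unfold th. pose proof (cosh_pos y). pose proof (cosh_sinh y).
  field_simplify; try lra. rewrite <- H0. field. lra.
Qed.

Lemma sumR_lncosh_nonneg zs : 0 <= sumR (map lncosh zs).
Proof. apply sumR_nonneg. intros; apply lncosh_nonneg. Qed.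

Lemma kap_sq lam zs : 0 < lam ->
  kap lam zs * kap lam zs = Kf lam (sumR (map (fun z => 2 * lncosh z) zs)).
Proof.
  intro Hl. unfold kap, Kf.
  assert (E : sumR (map (fun z => 2 * lncosh z) zs) = 2 * sumR (map lncosh zs)) by apply sumR_scal'.
  rewrite E. set (T := sumR (map lncosh zs)).
  set (s := sqrt lam * exp (- T)).
  assert (Es : s * s = lam * exp (- (2 * T))).
  { unfold s. replace (- (2 * T)) with (- T + - T) by ring. rewrite exp_plus.
    replace (sqrt lam * exp (- T) * (sqrt lam * exp (- T))) with (sqrt lam * sqrt lam * (exp (- T) * exp (- T))) by ring.
    rewrite sqrt_sqrt by lra. ring. }
  assert (0 <= s * s) by nra.
  assert (Q : sqrt (s * s + 1) * sqrt (s * s + 1) = s * s + 1) by (apply sqrt_sqrt; lra).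
  assert (0 < sqrt (s * s + 1)) by (apply sqrt_lt_R0; lra).
  rewrite <- Es. field_simplify; try lra. replace (sqrt (s * s + 1) ^ 2) with (s * s + 1) by (simpl; rewrite Rmult_1_r, sqrt_sqrt; lra). field. lra.
Qed.

Definition rho0 D lam := lam * (1 + lc D) / (lc D * (1 + lam)).
Definition betaD D lam := exp (rr D * ln (rho0 D lam) + (1 - 2 * rr D) * ln D).

Lemma coef_sum D lam zs : 1 < D -> 0 < lam <= lc D -> (forall z, In z zs -> 0 <= z) ->
  sumR (map (fun z => pw (kap lam zs * th z) (2 * rr D)) zs) <= betaD D lam.
Proof.
  intros HD Hl Hz.
  set (S := sumR (map (fun z => 2 * lncosh z) zs)).
  assert (HS : 0 <= S) by (apply sumR_nonneg; intros; pose proof (lncosh_nonneg x); lra).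
  assert (Hk : 0 < kap lam zs).
  { unfold kap. set (s := sqrt lam * exp (- sumR (map lncosh zs))).
    assert (0 < s) by (apply Rmult_lt_0_compat; [apply sqrt_lt_R0; lra|apply exp_pos]).
    apply Rdiv_lt_0_compat; auto. apply sqrt_lt_R0; nra. }
  assert (Hb : 0 < betaD D lam) by apply exp_pos.
  destruct HS as [HS|HS].
  - eapply Rle_trans. apply (sumR_le _ _ (fun z => betaD D lam / S * (2 * lncosh z))).
    2:{ rewrite sumR_scal'. fold S. right. field. lra. }
    intros z Hzi. specialize (Hz z Hzi).
    destruct (Req_dec z 0) as [Z|Z].
    { subst. assert (th 0 = 0) by (unfold th, sinh; rewrite Ropp_0; unfold Rdiv; ring). rewrite H, Rmult_0_r, pw_0.
      pose proof (lncosh_nonneg 0). apply Rmult_le_pos; [|lra]. left; apply Rdiv_lt_0_compat; lra. }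
    set (a := 2 * lncosh z).
    assert (Ha : 0 < a) by (unfold a; pose proof (lncosh_pos z Z); lra).
    assert (HaS : a <= S).
    { unfold S, a. clear -Hzi. induction zs; simpl in *. destruct Hzi.
      destruct Hzi as [<-|Hi]. pose proof (sumR_nonneg zs (fun z => 2 * lncosh z) (fun x _ => ltac:(pose proof (lncosh_nonneg x); lra))). lra.
      pose proof (IHzs Hi). pose proof (lncosh_nonneg a). lra. }
    assert (Ht : 0 < th z).
    { unfold th. apply Rdiv_lt_0_compat; [|apply cosh_pos]. unfold sinh.
      apply Rdiv_lt_0_compat; [|lra]. apply Rlt_Rminus. apply exp_increasing. lra. }
    rewrite pw_pos by (apply Rmult_lt_0_compat; auto).
    assert (E1 : 2 * rr D * ln (kap lam zs * th z) = rr D * (ln (Kf lam S) + ln (1 - exp (- a)))).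
    { unfold S, a. rewrite <- kap_sq by lra. rewrite <- th_sq.
      rewrite <- ln_mult by nra. replace (kap lam zs * kap lam zs * (th z * th z)) with ((kap lam zs * th z) * (kap lam zs * th z)) by ring.
      assert (P : 0 < kap lam zs * th z) by (apply Rmult_lt_0_compat; auto). rewrite (ln_mult _ _ P P). ring. }
    rewrite E1.
    pose proof (KL D lam a S HD Hl Ha (Rlt_le_trans _ _ _ Ha HaS)) as K.
    assert (rr D * (ln (Kf lam S) + ln (1 - exp (- a))) <= ln (betaD D lam) - ln (S / a)).
    { unfold betaD. rewrite ln_exp. unfold rho0. lra. }
    eapply Rle_trans. apply exp_le. apply H.
    assert (0 < S / a) by (apply Rdiv_lt_0_compat; lra).
    unfold Rminus. rewrite exp_plus, exp_Ropp, !exp_ln by auto. right. field. lra.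
  - assert (Z0 : forall z, In z zs -> pw (kap lam zs * th z) (2 * rr D) = 0).
    { intros z Hzi. assert (2 * lncosh z = 0).
      { apply (sumR_zero zs (fun z => 2 * lncosh z)); auto. intros; pose proof (lncosh_nonneg x); lra. }
      destruct (Req_dec z 0) as [->|Z].
      - assert (th 0 = 0) by (unfold th, sinh; rewrite Ropp_0; unfold Rdiv; ring). rewrite H0, Rmult_0_r, pw_0. auto.
      - pose proof (lncosh_pos z Z). lra. }
    rewrite (map_ext_in _ (fun _ => 0)) by auto.
    assert (Hz0 : forall l : list R, sumR (map (fun _ => 0) l) = 0) by (induction l; simpl; auto; rewrite IHl; ring).
    rewrite Hz0. lra.
Qed.

Lemma ln_lt_m1 y : 0 < y -> y <> 1 -> ln y < y - 1.
Proof.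
  intros H H1. rewrite <- (exp_ln y) at 2 by auto. pose proof (exp_ineq1 (ln y)).
  assert (ln y <> 0). { intro E. apply H1. rewrite <- (exp_ln y) by auto. rewrite E, exp_0; auto. }
  specialize (H0 H2). lra.
Qed.

Lemma rr_gt1 D : 1 < D -> 1 < rr D.
Proof.
  intro HD. unfold rr. pose proof (a0_pos D HD).
  assert (a0 D < / (D - 1)).
  { unfold a0. eapply Rlt_le_trans. apply ln_lt_m1. apply Rdiv_lt_0_compat; lra.
    intro E. assert (E2 : D = D / (D - 1) * (D - 1)) by (field; lra). rewrite E in E2. lra.
    right. field. lra. }
  assert ((D - 1) * a0 D < 1).
  { apply (Rmult_lt_compat_l (D - 1)) in H0; [|lra]. rewrite Rinv_r in H0 by lra. lra. }
  rewrite <- Rinv_1. apply Rinv_lt_contravar; nra.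
Qed.

Definition pD D := 2 * rr D.
Definition qD D := pD D / (pD D - 1).
Definition gam D lam := exp ((qD D - 1) * ln (betaD D lam)).

Lemma pq_facts D : 1 < D -> 1 < pD D /\ 1 < qD D /\ / pD D + / qD D = 1.
Proof.
  intro HD. pose proof (rr_gt1 D HD). unfold qD, pD.
  split. lra. split. apply (Rmult_lt_reg_r (2 * rr D - 1)). lra. field_simplify; lra.
  field. lra.
Qed.

Lemma vertex_bound D lam ps : 1 < D -> 0 < lam <= lc D ->
  (forall p, In p ps -> 0 <= fst p /\ 0 <= snd p) ->
  pw (Rabs (Gm lam (map fst ps) - Gm lam (map snd ps))) (qD D) <=
  gam D lam * sumR (map (fun p => pw (Rabs (fst p - snd p)) (qD D)) ps).
Proof.
  intros HD Hl Hps. destruct (pq_facts D HD) as [Hp [Hq Hpq]].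
  destruct (vertex_mvt lam ps (proj1 Hl) Hps) as [c [Hc HE]].
  set (zs := map (lin c) ps).
  pose proof (holder_q (map (fun p => (kap lam zs * th (lin c p), Rabs (fst p - snd p))) ps)
     (Rabs (Gm lam (map fst ps) - Gm lam (map snd ps))) (betaD D lam) (pD D) (qD D) Hp Hq Hpq (exp_pos _)) as H.
  rewrite !map_map in H. simpl in H. unfold gam. apply H.
  - intros x Hx. apply in_map_iff in Hx. destruct Hx as [p [<- Hp']]. simpl. split.
    + apply Rmult_le_pos. unfold kap. set (s := sqrt lam * exp (- sumR (map lncosh zs))).
      assert (0 <= s) by (unfold s; apply Rmult_le_pos; [apply sqrt_pos| left; apply exp_pos]).
      apply Rdiv_le_0_compat; auto. apply sqrt_lt_R0; nra.
      apply th_nonneg. unfold lin. destruct (Hps p Hp'). nra.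
    + apply Rabs_pos.
  - exact HE.
  - pose proof (coef_sum D lam zs HD Hl) as CS.
    replace (fold_right Rplus 0 (map (fun x : R * R => pw (kap lam zs * th (lin c x)) (pD D)) ps))
      with (fold_right Rplus 0 (map (fun z => pw (kap lam zs * th z) (2 * rr D)) zs)).
    2:{ unfold zs at 2. rewrite map_map. reflexivity. }
    apply CS. intros z Hz. unfold zs in Hz. apply in_map_iff in Hz. destruct Hz as [p [<- Hp']].
    unfold lin. destruct (Hps p Hp'). nra.
Qed.

Definition xv d lam (sigma : bcond) n v :=
  match n with
  | O => lam
  | S n' => lam * prodR (map (fun c => pr d lam sigma n' (v ++ [c])) (seq 0 (d (length v))))
  end.
Definition msg d lam sigma n v := asinh (sqrt (xv d lam sigma n v)).

Lemma inv1p x : 0 <= x -> 0 <= 1 / (1 + x) <= 1.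
Proof.
  intro H. split. apply Rdiv_le_0_compat; lra.
  unfold Rdiv. rewrite Rmult_1_l. rewrite <- Rinv_1 at 2. apply Rinv_le_contravar; lra.
Qed.

Lemma pr_range d lam sigma n v : 0 < lam -> 0 <= pr d lam sigma n v <= 1.
Proof.
  intro Hl. revert v; induction n; intro v; simpl.
  - unfold base_p. destruct (sigma v) as [[|]|]; try lra.
    apply inv1p; lra.
  - destruct (sigma v) as [[|]|]; try lra.
    assert (0 <= prodR (map (fun c => pr d lam sigma n (v ++ [c])) (seq 0 (d (length v))))).
    { apply prodR_nonneg. intros. apply IHn. }
    apply inv1p; nra.
Qed.

Lemma prodR_le1 {X} (l : list X) f : (forall x, In x l -> 0 <= f x <= 1) -> prodR (map f l) <= 1.
Proof.
  induction l; simpl; intros H. lra.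
  pose proof (H a (or_introl eq_refl)). pose proof (IHl (fun x h => H x (or_intror h))).
  pose proof (prodR_nonneg l f (fun x h => proj1 (H x (or_intror h)))). nra.
Qed.

Lemma xv_range d lam sigma n v : 0 < lam -> 0 <= xv d lam sigma n v <= lam.
Proof.
  intro Hl. destruct n; simpl. lra.
  pose proof (prodR_nonneg (seq 0 (d (length v))) (fun c => pr d lam sigma n (v ++ [c])) (fun c _ => proj1 (pr_range d lam sigma n (v ++ [c]) Hl))).
  pose proof (prodR_le1 (seq 0 (d (length v))) (fun c => pr d lam sigma n (v ++ [c])) (fun c _ => pr_range d lam sigma n (v ++ [c]) Hl)).
  split; nra.
Qed.

Lemma pr_free d lam sigma n v : sigma v = None -> pr d lam sigma n v = 1 / (1 + xv d lam sigma n v).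
Proof. intro H. destruct n; simpl; unfold base_p; rewrite H; reflexivity. Qed.

Lemma exp_asinh z : exp (asinh z) = z + sqrt (z * z + 1).
Proof. unfold asinh. apply exp_ln, asinh_pos_arg. Qed.

Lemma inv_asinh_arg z : / (z + sqrt (z * z + 1)) = sqrt (z * z + 1) - z.
Proof.
  pose proof (asinh_pos_arg z).
  assert (Q : sqrt (z * z + 1) * sqrt (z * z + 1) = z * z + 1) by (apply sqrt_sqrt; nra).
  apply (Rmult_eq_reg_l (z + sqrt (z * z + 1))); [|lra]. rewrite Rinv_r by lra. nra.
Qed.

Lemma cosh_asinh z : cosh (asinh z) = sqrt (z * z + 1).
Proof. unfold cosh. rewrite exp_Ropp, exp_asinh, inv_asinh_arg. field. Qed.

Lemma sinh_asinh z : sinh (asinh z) = z.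
Proof. unfold sinh. rewrite exp_Ropp, exp_asinh, inv_asinh_arg. field. Qed.

Lemma asinh_mono z1 z2 : 0 <= z1 -> z1 <= z2 -> asinh z1 <= asinh z2.
Proof.
  intros H0 H. unfold asinh. apply ln_le. apply asinh_pos_arg.
  apply Rplus_le_compat; auto. apply sqrt_le_1; nra.
Qed.

Lemma asinh_0 : asinh 0 = 0.
Proof. unfold asinh. rewrite Rmult_0_l, Rplus_0_l, Rplus_0_l, sqrt_1. apply ln_1. Qed.

Lemma msg_range d lam sigma n v : 0 < lam ->
  0 <= msg d lam sigma n v <= asinh (sqrt lam).
Proof.
  intro Hl. unfold msg. pose proof (xv_range d lam sigma n v Hl).
  split. rewrite <- asinh_0. apply asinh_mono. lra. apply sqrt_pos.
  apply asinh_mono. apply sqrt_pos. apply sqrt_le_1; lra.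
Qed.

Lemma pr_free_exp d lam sigma n v : 0 < lam -> sigma v = None ->
  pr d lam sigma n v = exp (- (2 * lncosh (msg d lam sigma n v))).
Proof.
  intros Hl H. rewrite pr_free, exp_m2lncosh by auto. unfold msg. rewrite cosh_asinh.
  pose proof (xv_range d lam sigma n v Hl).
  rewrite sqrt_sqrt by (rewrite sqrt_sqrt; lra). rewrite sqrt_sqrt by lra. rewrite Rplus_comm. field. lra.
Qed.

Definition fc (d : nat -> nat) (sigma : bcond) v :=
  filter (fun c => match sigma (v ++ [c]) with None => true | _ => false end) (seq 0 (d (length v))).

Lemma prodR_filter {X} (l : list X) f p : (forall x, In x l -> p x = false -> f x = 1) ->
  prodR (map f l) = prodR (map f (filter p l)).
Proof.
  induction l; simpl; intros H. auto.
  destruct (p a) eqn:E; simpl; rewrite IHl by auto. auto. rewrite H; auto. ring.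
Qed.

Lemma prodR_exp {X} (l : list X) g : prodR (map (fun x => exp (g x)) l) = exp (sumR (map g l)).
Proof. induction l; simpl. rewrite exp_0; auto. rewrite IHl, exp_plus. auto. Qed.

Lemma msg_step d lam sigma n v : 0 < lam -> sigma v = None ->
  (forall c, (c < d (length v))%nat -> sigma (v ++ [c]) <> Some true) ->
  msg d lam sigma (S n) v = Gm lam (map (fun c => msg d lam sigma n (v ++ [c])) (fc d sigma v)).
Proof.
  intros Hl Hv Hc. unfold msg at 1, Gm. f_equal. simpl xv.
  rewrite (prodR_filter _ _ (fun c => match sigma (v ++ [c]) with None => true | _ => false end)).
  2:{ intros c Hin E. apply in_seq in Hin. destruct (sigma (v ++ [c])) as [[|]|] eqn:S.
      exfalso; apply (Hc c); auto; lia. destruct n; simpl; [unfold base_p|]; rewrite S; reflexivity. discriminate. }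
  fold (fc d sigma v).
  rewrite (map_ext_in _ (fun c => exp (- (2 * lncosh (msg d lam sigma n (v ++ [c])))))).
  2:{ intros c Hin. apply pr_free_exp; auto. apply filter_In in Hin as [_ Hm]. destruct (sigma (v ++ [c])) as [b|]; [discriminate|reflexivity]. }
  rewrite prodR_exp, map_map.
  set (T := sumR (map (fun c => lncosh (msg d lam sigma n (v ++ [c]))) (fc d sigma v))).
  replace (sumR (map (fun x => - (2 * lncosh (msg d lam sigma n (v ++ [x])))) (fc d sigma v))) with (- T + - T).
  2:{ unfold T. clear. induction (fc d sigma v); simpl. ring. rewrite <- IHl. ring. }
  rewrite exp_plus. pose proof (exp_pos (- T)).
  rewrite sqrt_mult by nra. rewrite sqrt_square by lra. reflexivity.
Qed.

Lemma prodR_zero {X} (l : list X) f x : In x l -> f x = 0 -> prodR (map f l) = 0.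
Proof.
  induction l; simpl; intros H E. destruct H. destruct H as [<-|H]. rewrite E; ring. rewrite IHl; auto; ring.
Qed.

Lemma msg_zero d lam sigma n v c : (c < d (length v))%nat -> sigma (v ++ [c]) = Some true ->
  xv d lam sigma (S n) v = 0.
Proof.
  intros Hc Hs. simpl. rewrite (prodR_zero _ _ c). ring. apply in_seq; lia.
  destruct n; simpl; [unfold base_p|]; rewrite Hs; auto.
Qed.


Definition Nrel (d : nat -> nat) k j := prodR (map (fun i => INR (d i)) (seq k j)).

Lemma Nrel_nonneg d k j : 0 <= Nrel d k j.
Proof. unfold Nrel. apply prodR_nonneg. intros; apply pos_INR. Qed.

Lemma pw_mono x y q : 0 <= x <= y -> 0 < q -> pw x q <= pw y q.
Proof.
  intros [H1 H2] Hq. destruct H1 as [H1|H1].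
  - rewrite !pw_pos by lra. apply exp_le. apply Rmult_le_compat_l. lra. apply ln_le; lra.
  - subst. rewrite pw_0. apply pw_nonneg.
Qed.

Lemma sumR_le_len {X} (l : list X) f B : (forall x, In x l -> f x <= B) -> sumR (map f l) <= INR (length l) * B.
Proof.
  induction l; cbn [length map fold_right]; intros H. simpl; lra. rewrite S_INR.
  pose proof (H a (or_introl eq_refl)). pose proof (IHl (fun x h => H x (or_intror h))). lra.
Qed.

Lemma gam_pos D lam : 0 < gam D lam.
Proof. apply exp_pos. Qed.

Lemma tree_bound D lam d sigma tau m : 1 < D -> 0 < lam <= lc D ->
  (forall w, (length w <= m)%nat -> sigma w = tau w) ->
  forall j n v, (length v + j = m)%nat -> (j <= n)%nat -> sigma v = None ->
  pw (Rabs (msg d lam sigma n v - msg d lam tau n v)) (qD D) <=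
  gam D lam ^ j * Nrel d (length v) j * pw (asinh (sqrt lam)) (qD D).
Proof.
  intros HD Hl Hag. destruct (pq_facts D HD) as [Hp [Hq Hpq]].
  pose proof (gam_pos D lam) as Hg.
  induction j as [|j IH]; intros n v Hlen Hjn Hv.
  - simpl. unfold Nrel; simpl. rewrite !Rmult_1_l. apply pw_mono; [|lra].
    pose proof (msg_range d lam sigma n v (proj1 Hl)). pose proof (msg_range d lam tau n v (proj1 Hl)).
    split. apply Rabs_pos. apply Rabs_le. lra.
  - destruct n as [|n]; [lia|].
    assert (Htv : tau v = None) by (rewrite <- Hag by lia; auto).
    assert (Hch : forall c, sigma (v ++ [c]) = tau (v ++ [c])) by (intro c; apply Hag; rewrite length_app; simpl; lia).
    assert (RHS0 : 0 <= gam D lam ^ S j * Nrel d (length v) (S j) * pw (asinh (sqrt lam)) (qD D)).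
    { apply Rmult_le_pos; [|apply pw_nonneg]. apply Rmult_le_pos; [|apply Nrel_nonneg]. apply pow_le; lra. }
    destruct (existsb (fun c => match sigma (v ++ [c]) with Some true => true | _ => false end) (seq 0 (d (length v)))) eqn:Ex.
    + apply existsb_exists in Ex. destruct Ex as [c [Hc Hs]]. apply in_seq in Hc.
      destruct (sigma (v ++ [c])) as [[|]|] eqn:Sc; try discriminate.
      unfold msg. rewrite (msg_zero d lam sigma n v c), (msg_zero d lam tau n v c) by (try rewrite <- Hch; auto; lia).
      rewrite Rminus_diag, Rabs_R0, pw_0. auto.
    + assert (NT : forall c, (c < d (length v))%nat -> sigma (v ++ [c]) <> Some true).
      { intros c Hc E. assert (existsb (fun c => match sigma (v ++ [c]) with Some true => true | _ => false end) (seq 0 (d (length v))) = true).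
        { apply existsb_exists. exists c. split. apply in_seq; lia. rewrite E; auto. } congruence. }
      assert (NT' : forall c, (c < d (length v))%nat -> tau (v ++ [c]) <> Some true) by (intros c Hc; rewrite <- Hch; auto).
      rewrite (msg_step d lam sigma n v), (msg_step d lam tau n v) by (auto; lra).
      assert (EF : fc d tau v = fc d sigma v).
      { unfold fc. apply filter_ext. intro c. rewrite Hch. auto. }
      rewrite EF.
      set (F := fc d sigma v).
      set (ps := map (fun c => (msg d lam sigma n (v ++ [c]), msg d lam tau n (v ++ [c]))) F).
      replace (map (fun c => msg d lam sigma n (v ++ [c])) F) with (map fst ps) by (unfold ps; rewrite map_map; auto).
      replace (map (fun c => msg d lam tau n (v ++ [c])) F) with (map snd ps) by (unfold ps; rewrite map_map; auto).
      eapply Rle_trans. apply vertex_bound; auto.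
      { intros p Hp'. unfold ps in Hp'. apply in_map_iff in Hp'. destruct Hp' as [c [<- _]]. simpl.
        split; apply msg_range; lra. }
      unfold ps. rewrite map_map. simpl.
      set (B := gam D lam ^ j * Nrel d (S (length v)) j * pw (asinh (sqrt lam)) (qD D)).
      assert (HB : 0 <= B).
      { apply Rmult_le_pos; [|apply pw_nonneg]. apply Rmult_le_pos; [|apply Nrel_nonneg]. apply pow_le; lra. }
      eapply Rle_trans. apply Rmult_le_compat_l. lra. apply (sumR_le_len F _ B).
      { intros c Hc. unfold B. replace (S (length v)) with (length (v ++ [c])) by (rewrite length_app; simpl; lia).
        apply IH. rewrite length_app; simpl; lia. lia.
        unfold F, fc in Hc. apply filter_In in Hc as [_ Hm]. destruct (sigma (v ++ [c])) as [b|]; [discriminate|auto]. }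
      assert (INR (length F) <= INR (d (length v))).
      { apply le_INR. unfold F, fc. rewrite <- (length_seq (d (length v)) 0) at 2. apply filter_length_le. }
      unfold B. unfold Nrel at 2. simpl seq. simpl map. simpl fold_right. fold (Nrel d (S (length v)) j).
      pose proof (Nrel_nonneg d (S (length v)) j). pose proof (pw_nonneg (asinh (sqrt lam)) (qD D)).
      assert (0 <= gam D lam ^ j) by (apply pow_le; lra).
      simpl pow.
      assert (0 <= gam D lam ^ j * Nrel d (S (length v)) j * pw (asinh (sqrt lam)) (qD D)) by (apply Rmult_le_pos; [apply Rmult_le_pos|]; lra).
      set (X := gam D lam ^ j * Nrel d (S (length v)) j * pw (asinh (sqrt lam)) (qD D)) in *.
      replace (gam D lam * gam D lam ^ j * (INR (d (length v)) * Nrel d (S (length v)) j) * pw (asinh (sqrt lam)) (qD D))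
        with (gam D lam * (INR (d (length v)) * X)) by (unfold X; ring).
      apply Rmult_le_compat_l. lra. apply Rmult_le_compat_r; lra.
Qed.

Lemma lc_eq D : 1 < D -> lc D = Rpower D D / Rpower (D - 1) (D + 1).
Proof.
  intro HD. unfold lc, Rpower, a0. rewrite ln_div by lra.
  replace ((D + 1) * ln (D - 1)) with (D * ln (D - 1) + ln (D - 1)) by ring.
  rewrite exp_plus, exp_ln by lra.
  replace (D * (ln D - ln (D - 1))) with (D * ln D + - (D * ln (D - 1))) by ring.
  rewrite exp_plus, exp_Ropp. field. split. lra. apply Rgt_not_eq, exp_pos.
Qed.

Lemma root_l_nonneg x l : 0 <= root_l x l.
Proof. unfold root_l. destruct (Req_EM_T x 0). lra. unfold Rpower. left; apply exp_pos. Qed.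

Lemma Nlev_nonneg d l : 0 <= Nlev d l.
Proof. unfold Nlev. apply prodR_nonneg. intros; apply pos_INR. Qed.

Lemma gamD_lt1 D lam : 1 < D -> 0 < lam < lc D -> gam D lam * D < 1.
Proof.
  intros HD Hl. pose proof (rr_gt1 D HD) as Hr.
  assert (Hlc : 0 < lc D) by lra.
  assert (Hr0 : 0 < rho0 D lam < 1).
  { unfold rho0. split. apply Rdiv_lt_0_compat; nra.
    apply (Rmult_lt_reg_r (lc D * (1 + lam))). nra. field_simplify; nra. }
  assert (Eq1 : qD D - 1 = / (2 * rr D - 1)) by (unfold qD, pD; field; lra).
  unfold gam, betaD. rewrite ln_exp.
  replace ((qD D - 1) * (rr D * ln (rho0 D lam) + (1 - 2 * rr D) * ln D))
    with ((qD D - 1) * rr D * ln (rho0 D lam) + - ln D).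
  2:{ rewrite Eq1. field. lra. }
  rewrite exp_plus, exp_Ropp, exp_ln by lra.
  replace (exp ((qD D - 1) * rr D * ln (rho0 D lam)) * / D * D) with (exp ((qD D - 1) * rr D * ln (rho0 D lam))) by (field; lra).
  apply (Rlt_le_trans _ (exp 0)); [|rewrite exp_0; lra]. apply exp_increasing.
  assert (ln (rho0 D lam) < 0) by (rewrite <- ln_1; apply ln_increasing; lra).
  assert (0 < qD D - 1) by (rewrite Eq1; apply Rinv_0_lt_compat; lra).
  assert (P : 0 < (qD D - 1) * rr D) by (apply Rmult_lt_0_compat; lra).
  pose proof (Rmult_lt_compat_l _ _ _ P H). lra.
Qed.

Lemma params d lam : 0 < lam -> Rbar_lt (Finite lam) (lambda_c (conn_const d)) ->
  exists D D2 C0, 1 < D /\ lam < lc D /\ gam D lam * D2 < 1 /\ 0 < D2 /\ 1 <= C0 /\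
    forall m, Nlev d m <= C0 * D2 ^ m.
Proof.
  intros Hl H. unfold conn_const in H.
  set (u := fun l => root_l (Nlev d l) l) in *.
  destruct (ex_LimSup_seq u) as [ls Hls].
  rewrite (is_LimSup_seq_unique u ls Hls) in H.
  destruct ls as [Dl| |]; simpl in H.
  2:{ lra. }
  2:{ exfalso. destruct (Hls 0) as [N HN]. specialize (HN N (le_n N)). pose proof (root_l_nonneg (Nlev d N) N). unfold u in HN. lra. }
  assert (HD : exists D, 1 < D /\ lam < lc D /\ Dl <= D).
  { destruct (Rle_dec Dl 1) as [Hle|Hgt].
    - exists (1 + / (2 * lam + 1)). assert (0 < / (2 * lam + 1)) by (apply Rinv_0_lt_compat; lra).
      split. lra. split. 2: lra.
      unfold lc. replace (1 + / (2 * lam + 1) - 1) with (/ (2 * lam + 1)) by ring.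
      assert (1 <= exp ((1 + / (2 * lam + 1)) * a0 (1 + / (2 * lam + 1)))).
      { apply (Rle_trans _ (exp 0)); [rewrite exp_0; lra|]. apply exp_le.
        pose proof (a0_pos (1 + / (2 * lam + 1))). apply Rmult_le_pos; lra. }
      unfold Rdiv. rewrite Rinv_inv. nra.
    - exists Dl. split. lra. split. 2: lra.
      destruct (Rle_dec Dl 1); [lra|]. simpl in H. rewrite lc_eq by lra. auto. }
  destruct HD as [D [HD1 [HD2 HD3]]].
  set (r1 := gam D lam * D).
  assert (Hr1 : 0 < r1 < 1). { unfold r1. split. apply Rmult_lt_0_compat; [apply gam_pos|lra]. apply gamD_lt1; [lra| split; lra]. }
  set (D2 := D * (1 + / r1) / 2).
  assert (HD2' : D < D2).
  { unfold D2. assert (1 < / r1). { rewrite <- Rinv_1. apply Rinv_lt_contravar; lra. } nra. }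
  assert (Hg : gam D lam * D2 < 1).
  { unfold D2. unfold r1 in *. assert (gam D lam * D <> 0) by lra. assert (gam D lam <> 0) by (apply Rgt_not_eq, gam_pos). replace (gam D lam * (D * (1 + / (gam D lam * D)) / 2)) with ((gam D lam * D + 1) / 2) by (field; lra). lra. }
  assert (Heps : 0 < D2 - Dl) by lra. destruct (Hls (mkposreal (D2 - Dl) Heps)) as [_ [K0 HK0]]. simpl in HK0.
  set (C0 := 1 + sumR (map (fun n => Nlev d n / D2 ^ n) (seq 0 K0))).
  assert (HD2p : 0 < D2) by lra.
  assert (HC0 : 1 <= C0).
  { unfold C0. pose proof (sumR_nonneg (seq 0 K0) (fun n => Nlev d n / D2 ^ n)
      (fun n _ => Rdiv_le_0_compat _ _ (Nlev_nonneg d n) (pow_lt D2 n HD2p))). lra. }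
  exists D, D2, C0. split; [lra|]. split; [lra|]. split; [lra|]. split; [lra|]. split; [lra|].
  intro m. pose proof (pow_lt D2 m HD2p) as Pm.
  destruct (Compare_dec.le_lt_dec K0 m) as [Hm|Hm].
  - assert (Nlev d m <= D2 ^ m).
    { specialize (HK0 m Hm). unfold u, root_l in HK0. destruct (Req_EM_T (Nlev d m) 0) as [E|E].
      rewrite E; lra.
      destruct m as [|m].
      { unfold Nlev. simpl. lra. }
      pose proof (Nlev_nonneg d (S m)).
      unfold Rpower in HK0. apply Rlt_le.
      assert (0 < Nlev d (S m)) by lra.
      rewrite <- (exp_ln (Nlev d (S m))) by auto.
      rewrite <- Rpower_pow by lra. unfold Rpower. apply exp_increasing.
      assert (/ INR (S m) * ln (Nlev d (S m)) < ln D2).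
      { rewrite <- (ln_exp (/ INR (S m) * ln (Nlev d (S m)))). apply ln_increasing. apply exp_pos. lra. }
      assert (0 < INR (S m)) by (apply lt_0_INR; lia).
      apply (Rmult_lt_compat_l (INR (S m))) in H2; auto.
      rewrite <- Rmult_assoc, Rinv_r in H2 by lra. lra. }
    nra.
  - assert (Nlev d m / D2 ^ m <= C0 - 1).
    { unfold C0. ring_simplify.
      assert (In m (seq 0 K0)) by (apply in_seq; lia).
      clear -H0 HD2p. induction (seq 0 K0). destruct H0.
      simpl. destruct H0 as [<-|H0].
      + pose proof (sumR_nonneg l (fun n => Nlev d n / D2 ^ n)
          (fun n _ => Rdiv_le_0_compat _ _ (Nlev_nonneg d n) (pow_lt D2 n HD2p))). lra.
      + pose proof (Rdiv_le_0_compat _ _ (Nlev_nonneg d a) (pow_lt D2 a HD2p)). specialize (IHl H0). lra. }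
    assert (Nlev d m <= (C0 - 1) * D2 ^ m).
    { apply (Rmult_le_reg_r (/ D2 ^ m)). apply Rinv_0_lt_compat; auto.
      replace ((C0 - 1) * D2 ^ m * / D2 ^ m) with (C0 - 1) by (field; lra). auto. }
    nra.
Qed.

Lemma pr_agree d lam sigma tau n v :
  (forall w, (length w <= length v + n)%nat -> sigma w = tau w) ->
  pr d lam sigma n v = pr d lam tau n v.
Proof.
  revert v; induction n; intros v H; simpl.
  - unfold base_p. rewrite H by lia. auto.
  - rewrite H by lia. destruct (tau v) as [[|]|]; auto.
    do 4 f_equal. apply map_ext. intro c. apply IHn. intros w Hw. apply H. rewrite length_app in Hw. simpl in Hw. lia.
Qed.

Lemma Rratio_free d lam L sigma : 0 < lam -> boundary_ok d L sigma -> sigma [] = None ->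
  Rratio d lam L sigma = xv d lam sigma L [].
Proof.
  intros Hl Hb Hs. rewrite Rratio_pr, pr_free by auto.
  pose proof (xv_range d lam sigma L [] Hl). field. lra.
Qed.

Lemma Rratio_bound d lam L sigma : 0 < lam -> boundary_ok d L sigma ->
  Rabs (Rratio d lam L sigma) <= lam + Rabs (/ 0).
Proof.
  intros Hl Hb. pose proof (Rabs_pos (/ 0)).
  destruct (sigma []) as [[|]|] eqn:Hs.
  - rewrite Rratio_pr by auto.
    assert (pr d lam sigma L [] = 0) by (destruct L; simpl; [unfold base_p|]; rewrite Hs; auto).
    rewrite H0. replace (1 - (1 - 0)) with 0 by ring. replace (1 - 0) with 1 by ring. unfold Rdiv. rewrite Rmult_1_l. lra.
  - rewrite Rratio_pr by auto.
    assert (pr d lam sigma L [] = 1) by (destruct L; simpl; [unfold base_p|]; rewrite Hs; auto).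
    rewrite H0. replace (1 - 1) with 0 by ring. unfold Rdiv. rewrite Rmult_0_l, Rabs_R0. lra.
  - rewrite Rratio_free by auto. pose proof (xv_range d lam sigma L [] Hl). rewrite Rabs_right; lra.
Qed.

Lemma sinh_lip a b M : 0 <= a <= M -> 0 <= b <= M -> Rabs (sinh a - sinh b) <= exp M * Rabs (a - b).
Proof.
  intros Ha Hb.
  assert (Hd : forall x, is_derive sinh x (cosh x)).
  { intro x. unfold sinh, cosh. auto_derive; auto. field. }
  destruct (MVT_gen sinh b a cosh) as [c [Hc E]].
  - intros; apply Hd.
  - intros y _. apply continuity_pt_filterlim. apply (ex_derive_continuous sinh y). eexists; apply Hd.
  - rewrite E, Rabs_mult. apply Rmult_le_compat_r. apply Rabs_pos.
    assert (0 <= c <= M).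
    { destruct (Rle_dec a b). rewrite Rmin_right, Rmax_left in Hc by lra. lra.
      rewrite Rmin_left, Rmax_right in Hc by lra. lra. }
    unfold cosh. rewrite Rabs_right.
    2:{ pose proof (exp_pos c). pose proof (exp_pos (- c)). lra. }
    assert (exp (- c) <= exp c) by (apply exp_le; lra).
    assert (exp c <= exp M) by (apply exp_le; lra). lra.
Qed.

Lemma pw_inv E q B : 0 <= E -> 0 < q -> 0 < B -> pw E q <= B -> E <= exp (ln B / q).
Proof.
  intros HE Hq HB H. destruct HE as [HE|HE]; [|subst; left; apply exp_pos].
  rewrite pw_pos in H by auto. rewrite <- (exp_ln E) by auto. apply exp_le.
  assert (q * ln E <= ln B). { rewrite <- (ln_exp (q * ln E)). apply ln_le. apply exp_pos. auto. }
  apply (Rmult_le_reg_l q). auto. replace (q * (ln B / q)) with (ln B) by (field; lra). lra.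
Qed.

Lemma asinh_pos z : 0 < z -> 0 < asinh z.
Proof.
  intro H. unfold asinh. rewrite <- ln_1. apply ln_increasing. lra.
  assert (1 <= sqrt (z * z + 1)). { apply (Rle_trans _ (sqrt 1)). rewrite sqrt_1; lra. apply sqrt_le_1; nra. }
  lra.
Qed.

Theorem theorem5p1 (d : nat -> nat) (lam : R) :
  0 < lam ->
  Rbar_lt (Finite lam) (lambda_c (conn_const d)) ->
  exists C c : R, 0 < C /\ 0 < c /\
    forall (L l : nat) (sigma tau : bcond),
      boundary_ok d L sigma -> boundary_ok d L tau ->
      (forall v : list nat, (length v < l)%nat -> sigma v = tau v) ->
      Rabs (Rratio d lam L sigma - Rratio d lam L tau) <= C * exp (- c * INR l).
Proof.
  intros Hl Hlc.
  destruct (params d lam Hl Hlc) as [D [D2 [C0 [HD [HlD [Hg [HD2 [HC0 HN]]]]]]]].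
  destruct (pq_facts D HD) as [Hp [Hq Hpq]].
  set (q := qD D) in *. set (g := gam D lam) in *. set (M := asinh (sqrt lam)).
  assert (HM : 0 < M) by (apply asinh_pos, sqrt_lt_R0; auto).
  set (PM := pw M q).
  assert (HPM : 0 < PM) by (unfold PM; rewrite pw_pos by auto; apply exp_pos).
  assert (Hgp : 0 < g) by apply gam_pos.
  assert (HgD : 0 < g * D2) by (apply Rmult_lt_0_compat; lra).
  set (c := - ln (g * D2) / q).
  assert (Hc : 0 < c).
  { unfold c. assert (ln (g * D2) < 0) by (rewrite <- ln_1; apply ln_increasing; auto).
    apply Rdiv_lt_0_compat; lra. }
  set (K1 := exp (ln (C0 * PM) / q)).
  set (Kc := 2 * sqrt lam * exp M * K1).
  assert (HKc : 0 <= Kc).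
  { unfold Kc, K1. pose proof (sqrt_pos lam). pose proof (exp_pos M). pose proof (exp_pos (ln (C0 * PM) / q)).
    apply Rmult_le_pos; [apply Rmult_le_pos; [apply Rmult_le_pos|]|]; lra. }
  set (B0 := lam + Rabs (/ 0)).
  assert (HB0 : 0 <= B0) by (unfold B0; pose proof (Rabs_pos (/ 0)); lra).
  exists ((Kc + 2 * B0) * exp (2 * c) + 1), c.
  assert (E2c : 0 < exp (2 * c)) by apply exp_pos.
  split. nra. split. auto.
  intros L l sigma tau Hs Ht Hag.
  pose proof (exp_pos (- c * INR l)) as Hel.
  assert (Hbase : Rabs (Rratio d lam L sigma - Rratio d lam L tau) <= 2 * B0).
  { eapply Rle_trans. apply Rabs_triang. rewrite Rabs_Ropp.
    pose proof (Rratio_bound d lam L sigma Hl Hs). pose proof (Rratio_bound d lam L tau Hl Ht). unfold B0. lra. }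
  assert (Hprod : 0 <= (Kc + 2 * B0) * exp (2 * c) * exp (- c * INR l)) by (apply Rmult_le_pos; [apply Rmult_le_pos|]; lra).
  destruct (Compare_dec.le_lt_dec 2 l) as [Hl2|Hl2].
  2:{ assert (1 <= exp (2 * c) * exp (- c * INR l)).
      { rewrite <- exp_plus. apply (Rle_trans _ (exp 0)). rewrite exp_0; lra. apply exp_le.
        assert (INR l <= 2) by (replace 2 with (INR 2) by (simpl; ring); apply le_INR; lia). nra. }
      assert (2 * B0 <= (Kc + 2 * B0) * exp (2 * c) * exp (- c * INR l)).
      { rewrite Rmult_assoc. assert (2 * B0 <= (Kc + 2 * B0)) by lra. nra. }
      lra. }
  destruct (Compare_dec.le_lt_dec l L) as [HLl|HLl].
  2:{ assert (Rratio d lam L sigma = Rratio d lam L tau).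
      { rewrite !Rratio_pr by auto. rewrite (pr_agree d lam sigma tau L []). auto.
        intros w Hw. apply Hag. simpl in Hw. lia. }
      rewrite H, Rminus_diag, Rabs_R0. lra. }
  assert (Hroot : sigma [] = tau []) by (apply Hag; simpl; lia).
  destruct (sigma []) as [b|] eqn:Hsr.
  { assert (pr d lam sigma L [] = pr d lam tau L []).
    { destruct L as [|L']; [lia|]. simpl. rewrite Hsr, <- Hroot. destruct b; auto. }
    rewrite !Rratio_pr by auto. rewrite H, Rminus_diag, Rabs_R0. lra. }
  rewrite !Rratio_free by auto.
  set (m := (l - 2)%nat).
  set (E := Rabs (msg d lam sigma L [] - msg d lam tau L [])).
  assert (HT : pw E q <= g ^ m * Nrel d 0 m * PM).
  { apply (tree_bound D lam d sigma tau m HD (conj Hl (Rlt_le _ _ HlD))).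
    - intros w Hw. apply Hag. unfold m in Hw. lia.
    - simpl; lia.
    - unfold m; lia.
    - auto. }
  assert (HT2 : pw E q <= (g * D2) ^ m * (C0 * PM)).
  { eapply Rle_trans. apply HT. change (Nrel d 0 m) with (Nlev d m).
    rewrite Rpow_mult_distr.
    specialize (HN m). pose proof (pow_lt g m Hgp).
    replace ((g ^ m * D2 ^ m) * (C0 * PM)) with (g ^ m * (C0 * D2 ^ m) * PM) by ring.
    apply Rmult_le_compat_r; [lra|]. apply Rmult_le_compat_l; lra. }
  assert (HE : E <= K1 * exp (- c * INR m)).
  { eapply Rle_trans. apply (pw_inv E q ((g * D2) ^ m * (C0 * PM))); [apply Rabs_pos | lra | | apply HT2].
    apply Rmult_lt_0_compat. apply pow_lt; auto. nra.
    unfold K1. rewrite <- exp_plus. apply exp_le. rewrite ln_mult by (try apply pow_lt; nra).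
    rewrite <- Rpower_pow by auto. unfold Rpower. rewrite ln_exp. unfold c. right. field. lra. }
  assert (Xs : forall tt : bcond, xv d lam tt L [] = sinh (msg d lam tt L []) * sinh (msg d lam tt L [])).
  { intro tt. unfold msg. rewrite sinh_asinh. pose proof (xv_range d lam tt L [] Hl). rewrite sqrt_sqrt; lra. }
  rewrite !Xs.
  set (a := msg d lam sigma L []). set (b := msg d lam tau L []).
  assert (Ha : 0 <= a <= M) by apply msg_range, Hl.
  assert (Hb : 0 <= b <= M) by apply msg_range, Hl.
  assert (Sa : 0 <= sinh a <= sqrt lam).
  { unfold a, msg. rewrite sinh_asinh. pose proof (xv_range d lam sigma L [] Hl). split. apply sqrt_pos. apply sqrt_le_1; lra. }
  assert (Sb : 0 <= sinh b <= sqrt lam).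
  { unfold b, msg. rewrite sinh_asinh. pose proof (xv_range d lam tau L [] Hl). split. apply sqrt_pos. apply sqrt_le_1; lra. }
  replace (sinh a * sinh a - sinh b * sinh b) with ((sinh a - sinh b) * (sinh a + sinh b)) by ring.
  rewrite Rabs_mult.
  pose proof (sinh_lip a b M Ha Hb) as SL.
  assert (Rabs (sinh a + sinh b) <= 2 * sqrt lam) by (rewrite Rabs_right; lra).
  assert (Hlin : Rabs (sinh a - sinh b) * Rabs (sinh a + sinh b) <= exp M * E * (2 * sqrt lam)).
  { apply Rmult_le_compat; try apply Rabs_pos. apply SL. auto. }
  assert (Hm : INR m = INR l - 2) by (unfold m; rewrite minus_INR by lia; simpl; ring).
  assert (Hfin : exp M * E * (2 * sqrt lam) <= Kc * exp (2 * c) * exp (- c * INR l)).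
  { rewrite Hm in HE.
    replace (Kc * exp (2 * c) * exp (- c * INR l)) with (Kc * exp (- c * (INR l - 2))) by (rewrite Rmult_assoc, <- exp_plus; f_equal; f_equal; ring).
    unfold Kc.
    pose proof (exp_pos M). pose proof (sqrt_pos lam).
    replace (2 * sqrt lam * exp M * K1 * exp (- c * (INR l - 2))) with (exp M * (K1 * exp (- c * (INR l - 2))) * (2 * sqrt lam)) by ring.
    apply Rmult_le_compat_r. lra. apply Rmult_le_compat_l; lra. }
  assert (Kc * exp (2 * c) * exp (- c * INR l) <= ((Kc + 2 * B0) * exp (2 * c) + 1) * exp (- c * INR l)).
  { apply Rmult_le_compat_r. lra. nra. }
  lra.
Qed.
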